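(* Let $\theta$ satisfy Condition 1 with constants $0\le\sigma<1$, $\kappa\ge0$, $A\ge0$, and let $\beta\in\mathbb{R}$. Then the product $\mathfrak{S}_\theta=\prod_p(1+\theta_p/p)$ converges absolutely, and there is a constant $C(\theta,\beta)$ depending only on $\theta$ and $\beta$ such that for $x\ge2$ \[ \sum_{n\le x}n^\beta\phi_\theta(n)=\mathfrak{S}_\theta M_\beta(x)+C(\theta,\beta)+O_{\sigma,\kappa,A,\beta}\big(x^{\sigma+\beta}(\log x)^\kappa\big). \]
   Context: $p$ denotes a prime. Let $\theta:\mathbb{N}\to\mathbb{C}$, $n\mapsto\theta_n$, be a multiplicative function supported on square-free integers; the $\theta$-totient is $\phi_\theta(n)=\prod_{p\mid n}(1+\theta_p)=\sum_{d\mid n}\theta_d$. Condition 1: there are constants $0\le\sigma<1$ and $\kappa,A\ge0$ such that $\sum_{p\le x}|\theta_p|p^{-\sigma}\le\kappa\log\log x+A$ for all $x\ge2$. For real $\beta$, $M_\beta(x)=x^{\beta+1}/(\beta+1)$ if $\beta\ne-1$ and $M_{-1}(x)=\log x$. *)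

(* Defs.v *)
From Stdlib Require Import Reals Lra Lia List Arith ZArith.
Open Scope R_scope.

Definition Cx : Type := (R * R)%type.
Definition Cre (z : Cx) : R := fst z.
Definition Cim (z : Cx) : R := snd z.
Definition Czero : Cx := (0, 0).
Definition Cone : Cx := (1, 0).
Definition RtoC (r : R) : Cx := (r, 0).
Definition Cadd (z w : Cx) : Cx := (fst z + fst w, snd z + snd w).
Definition Csub (z w : Cx) : Cx := (fst z - fst w, snd z - snd w).
Definition Cmul (z w : Cx) : Cx :=
  (fst z * fst w - snd z * snd w, fst z * snd w + snd z * fst w).
Definition Cscal (r : R) (z : Cx) : Cx := (r * fst z, r * snd z).
Definition Cnorm (z : Cx) : R := sqrt (fst z * fst z + snd z * snd z).

Definition divb (d n : nat) : bool := Nat.eqb (n mod d) 0.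
Definition is_prime (p : nat) : Prop :=
  (1 < p)%nat /\ forall d : nat, Nat.divide d p -> d = 1%nat \/ d = p.
Definition primeb (p : nat) : bool :=
  Nat.ltb 1 p && forallb (fun d => negb (divb d p)) (seq 2 (p - 2)).
Definition squarefree (n : nat) : Prop :=
  forall p : nat, is_prime p -> ~ Nat.divide (p * p) n.

Definition multiplicative_sqfree (theta : nat -> Cx) : Prop :=
  theta 1%nat = Cone /\
  (forall m n : nat, (1 <= m)%nat -> (1 <= n)%nat -> Nat.gcd m n = 1%nat ->
     theta (m * n)%nat = Cmul (theta m) (theta n)) /\
  (forall n : nat, (1 <= n)%nat -> ~ squarefree n -> theta n = Czero).

Definition phi_theta (theta : nat -> Cx) (n : nat) : Cx :=
  fold_right Cadd Czero
    (map (fun d => if divb d n then theta d else Czero) (seq 1 n)).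

Definition nat_upto (x : R) : list nat := seq 1 (Z.to_nat (up x)).
Definition sumR_le (x : R) (f : nat -> R) : R :=
  fold_right Rplus 0
    (map (fun n => if Rle_dec (INR n) x then f n else 0) (nat_upto x)).
Definition sumC_le (x : R) (f : nat -> Cx) : Cx :=
  fold_right Cadd Czero
    (map (fun n => if Rle_dec (INR n) x then f n else Czero) (nat_upto x)).
Definition sumR_primes_le (x : R) (f : nat -> R) : R :=
  sumR_le x (fun p => if primeb p then f p else 0).
Definition prodC_primes_le (x : R) (f : nat -> Cx) : Cx :=
  fold_right Cmul Cone
    (map (fun n => if Rle_dec (INR n) x then (if primeb n then f n else Cone) else Cone)
         (nat_upto x)).

Definition Condition1 (theta : nat -> Cx) (sigma kappa A : R) : Prop :=
  forall x : R, 2 <= x ->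
    sumR_primes_le x (fun p => Cnorm (theta p) * Rpower (INR p) (- sigma))
      <= kappa * ln (ln x) + A.

Definition M (beta x : R) : R :=
  if Req_EM_T beta (-1) then ln x else Rpower x (beta + 1) / (beta + 1).

Definition Ccv (u : nat -> Cx) (l : Cx) : Prop :=
  forall eps : R, 0 < eps -> exists N : nat, forall n : nat, (n >= N)%nat ->
    Cnorm (Csub (u n) l) < eps.

(* Main.v *)
Require Import Defs.
From Stdlib Require Import Reals Lra Lia List Arith ZArith Psatz Classical FunctionalExtensionality.
Open Scope R_scope.

Definition sumRl (l : list nat) (f : nat -> R) : R := fold_right Rplus 0 (map f l).

Lemma sumRl_nil f : sumRl nil f = 0.
Proof. reflexivity. Qed.
Lemma sumRl_cons a l f : sumRl (a :: l) f = f a + sumRl l f.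
Proof. reflexivity. Qed.

Lemma sumRl_app l1 l2 f : sumRl (l1 ++ l2) f = sumRl l1 f + sumRl l2 f.
Proof. induction l1 as [|a l IH]; simpl app; rewrite ?sumRl_nil, ?sumRl_cons; [lra|rewrite IH; lra]. Qed.

Lemma sumRl_ext l f g : (forall x, In x l -> f x = g x) -> sumRl l f = sumRl l g.
Proof.
  induction l as [|a l IH]; intros H; rewrite ?sumRl_nil, ?sumRl_cons; [reflexivity|].
  rewrite H by (left; reflexivity). rewrite IH; [reflexivity|]. intros x Hx; apply H; right; exact Hx.
Qed.

Lemma sumRl_le l f g : (forall x, In x l -> f x <= g x) -> sumRl l f <= sumRl l g.
Proof.
  induction l as [|a l IH]; intros H; rewrite ?sumRl_nil, ?sumRl_cons; [lra|].
  assert (f a <= g a) by (apply H; left; reflexivity).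
  assert (sumRl l f <= sumRl l g) by (apply IH; intros x Hx; apply H; right; exact Hx). lra.
Qed.

Lemma sumRl_nonneg l f : (forall x, In x l -> 0 <= f x) -> 0 <= sumRl l f.
Proof. intros H. rewrite <- (sumRl_nil f) at 1.
  replace (sumRl nil f) with (sumRl l (fun _ => 0)).
  - apply sumRl_le; exact H.
  - induction l; rewrite ?sumRl_cons, ?sumRl_nil in *; [reflexivity|].
    rewrite IHl; [lra|]. intros; apply H; right; assumption.
Qed.

Lemma sumRl_zero l : sumRl l (fun _ => 0) = 0.
Proof. induction l; rewrite ?sumRl_cons, ?sumRl_nil in *; lra. Qed.

Lemma sumRl_plus l f g : sumRl l (fun x => f x + g x) = sumRl l f + sumRl l g.
Proof. induction l; rewrite ?sumRl_cons, ?sumRl_nil in *; lra. Qed.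

Lemma sumRl_minus l f g : sumRl l (fun x => f x - g x) = sumRl l f - sumRl l g.
Proof. induction l; rewrite ?sumRl_cons, ?sumRl_nil in *; lra. Qed.

Lemma sumRl_scal l c f : sumRl l (fun x => c * f x) = c * sumRl l f.
Proof. induction l; rewrite ?sumRl_cons, ?sumRl_nil in *; [ring|rewrite IHl; ring]. Qed.

Lemma sumRl_abs l f : Rabs (sumRl l f) <= sumRl l (fun x => Rabs (f x)).
Proof.
  induction l; rewrite ?sumRl_cons, ?sumRl_nil in *.
  - rewrite Rabs_R0; lra.
  - eapply Rle_trans; [apply Rabs_triang|]. lra.
Qed.

Lemma sumRl_map l h f : sumRl (map h l) f = sumRl l (fun x => f (h x)).
Proof. induction l; simpl map; rewrite ?sumRl_cons, ?sumRl_nil in *; [reflexivity|rewrite IHl; reflexivity]. Qed.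

Lemma sumRl_filter (P : nat -> bool) l f :
  sumRl l f = sumRl (filter P l) f + sumRl (filter (fun x => negb (P x)) l) f.
Proof.
  induction l as [|a l IH]; simpl filter; rewrite ?sumRl_nil; [lra|].
  destruct (P a); simpl negb; rewrite ?sumRl_cons, IH; lra.
Qed.

Lemma sumRl_incl_eq : forall s l f, NoDup l -> NoDup s -> incl l s ->
  (forall d, In d s -> ~ In d l -> f d = 0) -> sumRl s f = sumRl l f.
Proof.
  induction s as [|a s IH]; intros l f Hl Hs Hinc Hz.
  - destruct l as [|b l]; [reflexivity|]. exfalso; apply (Hinc b); left; reflexivity.
  - inversion Hs as [|a' s' Ha Hs']; subst.
    rewrite sumRl_cons.
    destruct (in_dec Nat.eq_dec a l) as [Hin|Hin].
    + destruct (in_split _ _ Hin) as [l1 [l2 E]]. subst l.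
      rewrite sumRl_app, sumRl_cons.
      rewrite (IH (l1 ++ l2) f).
      * rewrite sumRl_app; lra.
      * eapply NoDup_remove_1; eauto.
      * exact Hs'.
      * intros x Hx. assert (Hx' : In x (l1 ++ a :: l2)).
        { apply in_app_or in Hx; apply in_or_app; destruct Hx; [left|right;right]; auto. }
        destruct (Hinc x Hx') as [E|E]; [|exact E].
        subst x. exfalso. eapply NoDup_remove_2; eauto.
      * intros d Hd Hnd. apply Hz; [right; exact Hd|].
        intros Hd2. apply in_app_or in Hd2. destruct Hd2 as [H1|[H1|H1]].
        -- apply Hnd; apply in_or_app; left; exact H1.
        -- subst d; contradiction.
        -- apply Hnd; apply in_or_app; right; exact H1.
    + rewrite (Hz a (or_introl eq_refl) Hin).
      rewrite (IH l f Hl Hs').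
      * lra.
      * intros x Hx. destruct (Hinc x Hx) as [E|E]; [subst; contradiction|exact E].
      * intros d Hd Hnd. apply Hz; [right; exact Hd|exact Hnd].
Qed.

Lemma sumRl_incl_le : forall l s f, NoDup l -> incl l s ->
  (forall d, In d s -> 0 <= f d) -> sumRl l f <= sumRl s f.
Proof.
  induction l as [|a l IH]; intros s f Hl Hinc Hpos.
  - rewrite sumRl_nil. apply sumRl_nonneg; exact Hpos.
  - inversion Hl as [|a' l' Ha Hl']; subst.
    assert (Hin : In a s) by (apply Hinc; left; reflexivity).
    destruct (in_split _ _ Hin) as [s1 [s2 E]]. subst s.
    rewrite sumRl_cons, sumRl_app, sumRl_cons.
    assert (sumRl l f <= sumRl (s1 ++ s2) f).
    { apply IH; auto.
      - intros x Hx. assert (Hx' : In x (s1 ++ a :: s2)) by (apply Hinc; right; exact Hx).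
        apply in_app_or in Hx'; apply in_or_app. destruct Hx' as [H1|[H1|H1]]; auto.
        subst; contradiction.
      - intros d Hd; apply Hpos. apply in_app_or in Hd; apply in_or_app; destruct Hd; [left|right;right]; auto. }
    rewrite sumRl_app in H. lra.
Qed.

Lemma Cx_eq (z w : Cx) : fst z = fst w -> snd z = snd w -> z = w.
Proof. destruct z, w; simpl; intros; subst; reflexivity. Qed.

Definition sumCl (l : list nat) (f : nat -> Cx) : Cx := fold_right Cadd Czero (map f l).

Lemma sumCl_fst l f : fst (sumCl l f) = sumRl l (fun n => fst (f n)).
Proof. induction l; [reflexivity|]. rewrite sumRl_cons, <- IHl. reflexivity. Qed.
Lemma sumCl_snd l f : snd (sumCl l f) = sumRl l (fun n => snd (f n)).
Proof. induction l; [reflexivity|]. rewrite sumRl_cons, <- IHl. reflexivity. Qed.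

Ltac Csplit := apply Cx_eq; simpl; rewrite ?sumCl_fst, ?sumCl_snd; simpl.

Lemma Cnorm_nonneg z : 0 <= Cnorm z.
Proof. apply sqrt_pos. Qed.

Lemma Cnorm_sq z : Cnorm z * Cnorm z = fst z * fst z + snd z * snd z.
Proof. unfold Cnorm. apply sqrt_sqrt. nra. Qed.

Lemma Cnorm_le_iff z b : 0 <= b -> fst z * fst z + snd z * snd z <= b * b -> Cnorm z <= b.
Proof.
  intros Hb H. apply Rsqr_incr_0_var; [|exact Hb]. unfold Rsqr. rewrite Cnorm_sq. exact H.
Qed.

Lemma Cnorm_fst z : Rabs (fst z) <= Cnorm z.
Proof.
  apply Rsqr_incr_0_var; [|apply Cnorm_nonneg]. unfold Rsqr. rewrite Cnorm_sq.
  rewrite <- Rabs_mult. rewrite Rabs_right by nra. nra.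
Qed.
Lemma Cnorm_snd z : Rabs (snd z) <= Cnorm z.
Proof.
  apply Rsqr_incr_0_var; [|apply Cnorm_nonneg]. unfold Rsqr. rewrite Cnorm_sq.
  rewrite <- Rabs_mult. rewrite Rabs_right by nra. nra.
Qed.

Lemma Cnorm_le_sum z : Cnorm z <= Rabs (fst z) + Rabs (snd z).
Proof.
  apply Cnorm_le_iff. apply Rplus_le_le_0_compat; apply Rabs_pos.
  pose proof (Rabs_pos (fst z)); pose proof (Rabs_pos (snd z)).
  assert (Rabs (fst z) * Rabs (fst z) = fst z * fst z) by (rewrite <- Rabs_mult; apply Rabs_right; nra).
  assert (Rabs (snd z) * Rabs (snd z) = snd z * snd z) by (rewrite <- Rabs_mult; apply Rabs_right; nra).
  nra.
Qed.

Lemma Cnorm_triang z w : Cnorm (Cadd z w) <= Cnorm z + Cnorm w.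
Proof.
  apply Cnorm_le_iff. pose proof (Cnorm_nonneg z); pose proof (Cnorm_nonneg w); lra.
  simpl. pose proof (Cnorm_sq z) as Hz. pose proof (Cnorm_sq w) as Hw.
  pose proof (Cnorm_nonneg z); pose proof (Cnorm_nonneg w).
  destruct z as [a b], w as [c d]; cbn [fst snd] in *.
  assert (a*c + b*d <= Cnorm (a,b) * Cnorm (c,d)).
  { apply Rsqr_incr_0_var; [|apply Rmult_le_pos; assumption]. unfold Rsqr.
    replace (Cnorm (a, b) * Cnorm (c, d) * (Cnorm (a, b) * Cnorm (c, d))) with
      ((Cnorm (a, b) * Cnorm (a, b)) * (Cnorm (c, d) * Cnorm (c, d))) by ring.
    rewrite Hz, Hw. pose proof (Rle_0_sqr (a*d-b*c)). unfold Rsqr in *. nra. }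
  nra.
Qed.

Lemma Cnorm_mul z w : Cnorm (Cmul z w) = Cnorm z * Cnorm w.
Proof.
  unfold Cnorm. rewrite <- sqrt_mult by nra. f_equal. destruct z, w; simpl; ring.
Qed.

Lemma Cnorm_scal r z : Cnorm (Cscal r z) = Rabs r * Cnorm z.
Proof.
  unfold Cnorm. rewrite <- sqrt_Rsqr_abs. rewrite <- sqrt_mult by (unfold Rsqr; nra).
  f_equal. destruct z; simpl; unfold Rsqr; ring.
Qed.

Lemma Cnorm_RtoC r : Cnorm (RtoC r) = Rabs r.
Proof. unfold Cnorm, RtoC; simpl. rewrite <- sqrt_Rsqr_abs. f_equal. unfold Rsqr; ring. Qed.

Lemma Cnorm_Czero : Cnorm Czero = 0.
Proof. unfold Cnorm; simpl. replace (0*0+0*0) with 0 by ring. apply sqrt_0. Qed.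

Lemma Cnorm_sub_sym z w : Cnorm (Csub z w) = Cnorm (Csub w z).
Proof. unfold Cnorm; f_equal; destruct z, w; simpl; ring. Qed.

Lemma Cnorm_sum l f : Cnorm (sumCl l f) <= sumRl l (fun n => Cnorm (f n)).
Proof.
  induction l as [|a l IH].
  - rewrite sumRl_nil. unfold sumCl; simpl. rewrite Cnorm_Czero; lra.
  - rewrite sumRl_cons. unfold sumCl in *; simpl.
    eapply Rle_trans; [apply Cnorm_triang|]. lra.
Qed.

Lemma Cnorm_sub_triang z w u : Cnorm (Csub z u) <= Cnorm (Csub z w) + Cnorm (Csub w u).
Proof.
  replace (Csub z u) with (Cadd (Csub z w) (Csub w u)) by (Csplit; ring).
  apply Cnorm_triang.
Qed.

Definition fl (y : R) : nat := (Z.to_nat (up y) - 1)%nat.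

Lemma up_to_nat y : 0 <= y -> Z.to_nat (up y) = S (fl y) /\ INR (S (fl y)) = IZR (up y).
Proof.
  intros Hy. destruct (archimed y) as [H1 H2].
  assert (Hpos : (0 < up y)%Z) by (apply lt_0_IZR; lra).
  unfold fl. remember (Z.to_nat (up y)) as k.
  assert (Hk : Z.of_nat k = up y) by (subst; apply Z2Nat.id; lia).
  assert (k <> 0%nat) by lia.
  split; [lia|]. replace (S (k-1)) with k by lia. rewrite INR_IZR_INZ, Hk. reflexivity.
Qed.

Lemma fl_spec y : 0 <= y -> INR (fl y) <= y < INR (fl y) + 1.
Proof.
  intros Hy. destruct (up_to_nat y Hy) as [_ H]. rewrite S_INR in H.
  destruct (archimed y). lra.
Qed.

Lemma fl_le_iff y n : 0 <= y -> ((n <= fl y)%nat <-> INR n <= y).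
Proof.
  intros Hy. pose proof (fl_spec y Hy). split; intros H1.
  - apply le_INR in H1. lra.
  - destruct (le_lt_dec n (fl y)) as [|Hl]; [assumption|].
    exfalso.
    assert (INR (S (fl y)) <= INR n) by (apply le_INR; lia). rewrite S_INR in H0. lra.
Qed.

Lemma fl_unique y n : INR n <= y < INR n + 1 -> fl y = n.
Proof.
  intros [H1 H2]. assert (Hy : 0 <= y) by (pose proof (pos_INR n); lra).
  pose proof (fl_spec y Hy).
  apply (fl_le_iff y n Hy) in H1.
  destruct (Nat.eq_dec (fl y) n); [assumption|].
  assert (S n <= fl y)%nat by lia. apply le_INR in H0. rewrite S_INR in H0. lra.
Qed.

Lemma fl_INR n : fl (INR n) = n.
Proof. apply fl_unique; lra. Qed.

Lemma fl_mono x y : 0 <= x -> x <= y -> (fl x <= fl y)%nat.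
Proof. intros Hx Hxy. apply fl_le_iff; [lra|]. pose proof (fl_spec x Hx). lra. Qed.

Definition sR (N : nat) (f : nat -> R) : R := sumRl (seq 1 N) f.
Definition sC (N : nat) (f : nat -> Cx) : Cx := sumCl (seq 1 N) f.

Lemma sR_S N f : sR (S N) f = sR N f + f (S N).
Proof. unfold sR. rewrite seq_S, sumRl_app, sumRl_cons, sumRl_nil. replace (1 + N)%nat with (S N) by lia. ring. Qed.

Lemma sR_0 f : sR 0 f = 0.
Proof. reflexivity. Qed.

Lemma nat_upto_eq y : 0 <= y -> nat_upto y = seq 1 (fl y) ++ (S (fl y) :: nil).
Proof.
  intros Hy. unfold nat_upto. destruct (up_to_nat y Hy) as [H _]. rewrite H, seq_S.
  f_equal.
Qed.

Lemma sumR_le_eq y f : 0 <= y -> sumR_le y f = sR (fl y) f.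
Proof.
  intros Hy. unfold sumR_le. fold (sumRl (nat_upto y) (fun n => if Rle_dec (INR n) y then f n else 0)).
  rewrite nat_upto_eq by exact Hy. rewrite sumRl_app, sumRl_cons, sumRl_nil.
  pose proof (fl_spec y Hy).
  destruct (Rle_dec (INR (S (fl y))) y) as [Hc|Hc]; [rewrite S_INR in Hc; lra|].
  unfold sR. rewrite Rplus_0_r, Rplus_0_r. apply sumRl_ext. intros x Hx.
  apply in_seq in Hx. destruct (Rle_dec (INR x) y) as [|Hn]; [reflexivity|].
  exfalso; apply Hn. apply fl_le_iff; [lra|lia].
Qed.

Lemma sumC_le_eq y f : 0 <= y -> sumC_le y f = sC (fl y) f.
Proof.
  intros Hy. unfold sumC_le. fold (sumCl (nat_upto y) (fun n => if Rle_dec (INR n) y then f n else Czero)).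
  rewrite nat_upto_eq by exact Hy. pose proof (fl_spec y Hy).
  destruct (Rle_dec (INR (S (fl y))) y) as [Hc|Hc]; [rewrite S_INR in Hc; lra|].
  unfold sC. Csplit; rewrite sumRl_app, sumRl_cons, sumRl_nil;
   destruct (Rle_dec (INR (S (fl y))) y); try contradiction; simpl; rewrite !Rplus_0_r;
   apply sumRl_ext; intros x Hx; apply in_seq in Hx;
   (destruct (Rle_dec (INR x) y) as [|Hn]; [reflexivity|]);
   exfalso; apply Hn; apply fl_le_iff; (lra || lia).
Qed.

Definition prodCl (l : list nat) (g : nat -> Cx) : Cx := fold_right Cmul Cone (map g l).

Lemma Cmul_assoc a b c : Cmul a (Cmul b c) = Cmul (Cmul a b) c.
Proof. destruct a, b, c; Csplit; ring. Qed.
Lemma Cmul_comm a b : Cmul a b = Cmul b a.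
Proof. destruct a, b; Csplit; ring. Qed.
Lemma Cmul_one_r a : Cmul a Cone = a.
Proof. destruct a; Csplit; ring. Qed.

Lemma prodCl_app1 l a g : prodCl (l ++ a :: nil) g = Cmul (prodCl l g) (g a).
Proof.
  induction l as [|b l IH].
  - unfold prodCl; simpl. rewrite Cmul_one_r. destruct (g a); Csplit; ring.
  - unfold prodCl in *. simpl. rewrite IH. apply Cmul_assoc.
Qed.

Definition pC (N : nat) (g : nat -> Cx) : Cx := prodCl (seq 1 N) g.
Lemma pC_S N g : pC (S N) g = Cmul (pC N g) (g (S N)).
Proof. unfold pC. rewrite seq_S, prodCl_app1. replace (1 + N)%nat with (S N) by lia. reflexivity. Qed.

Lemma prodC_le_eq N f : prodC_primes_le (INR N) f =
   pC N (fun n => if primeb n then f n else Cone).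
Proof.
  unfold prodC_primes_le. rewrite nat_upto_eq by apply pos_INR. rewrite fl_INR.
  fold (prodCl (seq 1 N ++ S N :: nil) (fun n => if Rle_dec (INR n) (INR N) then (if primeb n then f n else Cone) else Cone)).
  rewrite prodCl_app1.
  destruct (Rle_dec (INR (S N)) (INR N)) as [Hc|Hc]; [rewrite S_INR in Hc; lra|].
  rewrite Cmul_one_r. unfold pC, prodCl. f_equal. apply map_ext_in. intros x Hx.
  apply in_seq in Hx. destruct (Rle_dec (INR x) (INR N)) as [|Hn]; [reflexivity|].
  exfalso; apply Hn; apply le_INR; lia.
Qed.

Lemma primeb_spec p : primeb p = true <-> is_prime p.
Proof.
  unfold primeb, is_prime. rewrite Bool.andb_true_iff, Nat.ltb_lt, forallb_forall. split.
  - intros [H1 H2]. split; [exact H1|]. intros d Hd.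
    assert (Hd0 : d <> 0%nat) by (intro; subst; destruct Hd as [k Hk]; lia).
    assert (Hdp : (d <= p)%nat) by (apply Nat.divide_pos_le; [lia|exact Hd]).
    destruct (Nat.eq_dec d 1); [left; assumption|].
    destruct (Nat.eq_dec d p); [right; assumption|].
    exfalso. assert (Hin : In d (seq 2 (p - 2))) by (apply in_seq; lia).
    specialize (H2 d Hin). unfold divb in H2.
    apply Nat.Lcm0.mod_divide in Hd. rewrite Hd in H2. simpl in H2. discriminate.
  - intros [H1 H2]. split; [exact H1|]. intros d Hin. apply in_seq in Hin.
    unfold divb. destruct (Nat.eqb_spec (p mod d) 0) as [E|E]; [|reflexivity].
    exfalso. apply Nat.Lcm0.mod_divide in E. destruct (H2 d E); lia.
Qed.

Lemma prime_gt1 p : is_prime p -> (1 < p)%nat.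
Proof. intros [H _]; exact H. Qed.

Lemma prime_div_mul q a b : is_prime q -> Nat.divide q (a * b) -> Nat.divide q a \/ Nat.divide q b.
Proof.
  intros Hq Hd. destruct (proj2 Hq (Nat.gcd q a) (Nat.gcd_divide_l q a)) as [E|E].
  - right. eapply Nat.gauss; eauto.
  - left. rewrite <- E. apply Nat.gcd_divide_r.
Qed.

Lemma prime_coprime p d : is_prime p -> ~ Nat.divide p d -> Nat.gcd d p = 1%nat.
Proof.
  intros Hp Hn. destruct (proj2 Hp (Nat.gcd d p) (Nat.gcd_divide_r d p)) as [E|E]; [exact E|].
  exfalso; apply Hn. rewrite <- E. apply Nat.gcd_divide_l.
Qed.

Fixpoint Dl (n : nat) : list nat :=
  match n with
  | O => 1%nat :: nil
  | S m => if primeb (S m) then Dl m ++ map (fun d => (d * S m)%nat) (Dl m) else Dl m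
  end.

Lemma Dl_good n : forall d, In d (Dl n) ->
  (1 <= d)%nat /\ (forall q, is_prime q -> Nat.divide q d -> (q <= n)%nat).
Proof.
  induction n as [|n IH]; intros d Hd; simpl in Hd.
  - destruct Hd as [E|[]]; subst. split; [lia|]. intros q Hq Hd.
    apply Nat.divide_1_r in Hd. subst. destruct Hq; lia.
  - destruct (primeb (S n)) eqn:Ep.
    + apply in_app_or in Hd. destruct Hd as [Hd|Hd].
      * destruct (IH d Hd) as [H1 H2]. split; [exact H1|]. intros q Hq Hqd. specialize (H2 q Hq Hqd); lia.
      * apply in_map_iff in Hd. destruct Hd as [d' [E Hd']]. subst d.
        destruct (IH d' Hd') as [H1 H2]. split; [nia|]. intros q Hq Hqd.
        destruct (prime_div_mul q _ _ Hq Hqd) as [Hq1|Hq1].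
        -- specialize (H2 q Hq Hq1); lia.
        -- apply Nat.divide_pos_le; [lia|exact Hq1].
    + destruct (IH d Hd) as [H1 H2]. split; [exact H1|]. intros q Hq Hqd. specialize (H2 q Hq Hqd); lia.
Qed.

Lemma NoDup_map_inj (h : nat -> nat) l : (forall a b, h a = h b -> a = b) -> NoDup l -> NoDup (map h l).
Proof.
  intros Hinj Hl. induction Hl as [|a l Ha Hl IH]; simpl; constructor; [|exact IH].
  intros Hin. apply in_map_iff in Hin. destruct Hin as [b [E Hb]]. apply Hinj in E. subst; contradiction.
Qed.

Lemma Dl_nodup n : NoDup (Dl n).
Proof.
  induction n as [|n IH]; simpl.
  - constructor; [intros []|constructor].
  - destruct (primeb (S n)) eqn:Ep; [|exact IH].
    apply NoDup_app; [exact IH| |].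
    + apply NoDup_map_inj; [|exact IH]. intros a b E. nia.
    + intros a Ha Hb. apply in_map_iff in Hb. destruct Hb as [d' [E Hd']]. subst a.
      destruct (Dl_good n _ Ha) as [_ H2].
      assert (Nat.divide (S n) (d' * S n)) by (exists d'; reflexivity).
      specialize (H2 (S n) (proj1 (primeb_spec _) Ep) H). lia.
Qed.

Lemma prime_divisor_exists d : (2 <= d)%nat -> exists q, is_prime q /\ Nat.divide q d.
Proof.
  induction d as [d IH] using (well_founded_induction lt_wf). intros Hd.
  destruct (primeb d) eqn:E.
  - exists d. split; [apply primeb_spec; exact E|apply Nat.divide_refl].
  - assert (Hnp : ~ is_prime d) by (intros H; apply primeb_spec in H; congruence).
    unfold is_prime in Hnp.
    assert (exists e, Nat.divide e d /\ e <> 1%nat /\ e <> d) as [e [He1 [He2 He3]]].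
    { apply Classical_Prop.NNPP. intros Hne. apply Hnp. split; [lia|].
      intros e He. apply Classical_Prop.NNPP. intros Hc. apply Hne. exists e.
      split; [exact He|]. split; intro; apply Hc; [left|right]; assumption. }
    assert (He0 : e <> 0%nat) by (intro; subst; destruct He1 as [k Hk]; lia).
    assert (e <= d)%nat by (apply Nat.divide_pos_le; [lia|exact He1]).
    destruct (IH e ltac:(lia) ltac:(lia)) as [q [Hq Hqe]].
    exists q. split; [exact Hq|]. eapply Nat.divide_trans; eauto.
Qed.

Lemma squarefree_div a b : squarefree b -> Nat.divide a b -> squarefree a.
Proof. intros Hb Hab p Hp Hpa. apply (Hb p Hp). eapply Nat.divide_trans; eauto. Qed.

Lemma Dl_complete n : forall d, (1 <= d)%nat -> squarefree d ->
  (forall q, is_prime q -> Nat.divide q d -> (q <= n)%nat) -> In d (Dl n).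
Proof.
  induction n as [|n IH]; intros d Hd Hsq Hf; simpl.
  - destruct (Nat.eq_dec d 1); [left; lia|]. exfalso.
    destruct (prime_divisor_exists d ltac:(lia)) as [q [Hq Hqd]].
    specialize (Hf q Hq Hqd). destruct Hq; lia.
  - destruct (primeb (S n)) eqn:Ep.
    + apply in_or_app.
      destruct (Nat.Lcm0.mod_divide d (S n)) as [_ Hmd].
      destruct (Nat.eq_dec (d mod S n) 0) as [Hm|Hm].
      * apply Nat.Lcm0.mod_divide in Hm. destruct Hm as [k Hk]. right.
        apply in_map_iff. exists k. split; [lia|].
        apply IH.
        -- nia.
        -- apply (squarefree_div k d Hsq). exists (S n). lia.
        -- intros q Hq Hqk. assert (q <= S n)%nat.
           { apply Hf; [exact Hq|]. rewrite Hk. apply Nat.divide_mul_l; exact Hqk. }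
           destruct (Nat.eq_dec q (S n)); [|lia]. subst q. exfalso.
           apply (Hsq (S n) Hq). rewrite Hk. apply Nat.mul_divide_mono_r. exact Hqk.
      * left. apply IH; [exact Hd|exact Hsq|]. intros q Hq Hqd.
        assert (q <= S n)%nat by (apply Hf; assumption).
        destruct (Nat.eq_dec q (S n)); [|lia]. subst q. exfalso. apply Hm. apply Nat.Lcm0.mod_divide. exact Hqd.
    + apply IH; [exact Hd|exact Hsq|]. intros q Hq Hqd.
      assert (q <= S n)%nat by (apply Hf; assumption).
      destruct (Nat.eq_dec q (S n)); [|lia]. subst q. apply primeb_spec in Hq. congruence.
Qed.

Lemma list_bound (l : list nat) : exists M, forall d, In d l -> (d <= M)%nat.
Proof.
  induction l as [|a l [M HM]].
  - exists 0%nat. intros d [].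
  - exists (Nat.max a M). intros d [E|Hd]; [subst; lia|]. specialize (HM d Hd); lia.
Qed.

Lemma sumCl_app l1 l2 f : sumCl (l1 ++ l2) f = Cadd (sumCl l1 f) (sumCl l2 f).
Proof. Csplit; rewrite sumRl_app; reflexivity. Qed.

Lemma sumCl_map l h f : sumCl (map h l) f = sumCl l (fun x => f (h x)).
Proof. unfold sumCl. rewrite map_map. reflexivity. Qed.

Lemma sumCl_ext l f g : (forall x, In x l -> f x = g x) -> sumCl l f = sumCl l g.
Proof. intros H. unfold sumCl. f_equal. apply map_ext_in. exact H. Qed.

Lemma sumCl_mul_r l f c : sumCl l (fun d => Cmul (f d) c) = Cmul (sumCl l f) c.
Proof.
  induction l as [|a l IH].
  - destruct c; Csplit; ring.
  - unfold sumCl in *. simpl. rewrite IH. destruct (f a), c, (fold_right Cadd Czero (map f l)). Csplit; ring.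
Qed.

Definition multC (g : nat -> Cx) : Prop :=
  g 1%nat = Cone /\ forall a b, (1 <= a)%nat -> (1 <= b)%nat -> Nat.gcd a b = 1%nat -> g (a * b)%nat = Cmul (g a) (g b).

Lemma Dl_sum_prod g n : multC g ->
  sumCl (Dl n) g = pC n (fun m => if primeb m then Cadd Cone (g m) else Cone).
Proof.
  intros [H1 Hm]. induction n as [|n IH].
  - simpl. unfold sumCl, pC, prodCl; simpl. rewrite H1. Csplit; ring.
  - rewrite pC_S. simpl Dl. destruct (primeb (S n)) eqn:Ep.
    + rewrite sumCl_app, sumCl_map, IH.
      rewrite (sumCl_ext _ _ (fun d => Cmul (g d) (g (S n)))).
      * rewrite sumCl_mul_r, IH.
        destruct (pC n _), (g (S n)). Csplit; ring.
      * intros d Hd. destruct (Dl_good n d Hd) as [Hd1 Hd2]. apply Hm; [exact Hd1|lia|].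
        apply prime_coprime; [apply primeb_spec; exact Ep|]. intros Hdiv.
        specialize (Hd2 (S n) (proj1 (primeb_spec _) Ep) Hdiv). lia.
    + rewrite IH, Cmul_one_r. reflexivity.
Qed.

Lemma Dl_sum_exp (a : nat -> R) n :
  a 1%nat = 1 -> (forall d, 0 <= a d) ->
  (forall x y, (1 <= x)%nat -> (1 <= y)%nat -> Nat.gcd x y = 1%nat -> a (x * y)%nat = a x * a y) ->
  sumRl (Dl n) a <= exp (sR n (fun p => if primeb p then a p else 0)).
Proof.
  intros H1 Hpos Hm. induction n as [|n IH].
  - simpl. rewrite sR_0, exp_0, sumRl_cons, sumRl_nil, H1. lra.
  - rewrite sR_S. simpl Dl. destruct (primeb (S n)) eqn:Ep.
    + rewrite sumRl_app, sumRl_map.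
      rewrite (sumRl_ext (Dl n) (fun x => a (x * S n)%nat) (fun d => a (S n) * a d)).
      * rewrite sumRl_scal, exp_plus.
        assert (1 + a (S n) <= exp (a (S n))).
        { destruct (Req_dec (a (S n)) 0) as [E|E]; [rewrite E, exp_0; lra|].
          left; apply exp_ineq1; exact E. }
        assert (0 <= sumRl (Dl n) a) by (apply sumRl_nonneg; intros; apply Hpos).
        pose proof (Hpos (S n)).
        replace (sumRl (Dl n) a + a (S n) * sumRl (Dl n) a) with (sumRl (Dl n) a * (1 + a (S n))) by ring.
        apply Rmult_le_compat; lra.
      * intros d Hd. destruct (Dl_good n d Hd) as [Hd1 Hd2]. rewrite Hm; [ring|exact Hd1|lia|].
        apply prime_coprime; [apply primeb_spec; exact Ep|]. intros Hdiv.
        specialize (Hd2 (S n) (proj1 (primeb_spec _) Ep) Hdiv). lia.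
    + rewrite Rplus_0_r. exact IH.
Qed.

Lemma exp_le a b : a <= b -> exp a <= exp b.
Proof. intros [H|H]; [left; apply exp_increasing; exact H|subst; lra]. Qed.

Lemma ln_le' a b : 0 < a -> a <= b -> ln a <= ln b.
Proof. intros Ha [H|H]; [left; apply ln_increasing; lra|subst; lra]. Qed.

Lemma Rpower_pos x y : 0 < Rpower x y.
Proof. unfold Rpower; apply exp_pos. Qed.

Lemma Rpower_one y : Rpower 1 y = 1.
Proof. unfold Rpower. rewrite ln_1, Rmult_0_r, exp_0. reflexivity. Qed.

Lemma Rpower_le_base_pos a b y : 0 <= y -> 0 < a -> a <= b -> Rpower a y <= Rpower b y.
Proof. intros; apply Rle_Rpower_l; auto. Qed.

Lemma Rpower_le_base_neg a b y : y <= 0 -> 0 < a -> a <= b -> Rpower b y <= Rpower a y.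
Proof.
  intros Hy Ha Hab. unfold Rpower. apply exp_le.
  assert (ln a <= ln b) by (apply ln_le'; lra). nra.
Qed.

Lemma Rpower_exp_mono x a b : 1 <= x -> a <= b -> Rpower x a <= Rpower x b.
Proof. intros; apply Rle_Rpower; auto. Qed.

Lemma ln2_pos : 0 < ln 2.
Proof. rewrite <- ln_1. apply ln_increasing; lra. Qed.

Lemma ln_pos_ge2 x : 2 <= x -> ln 2 <= ln x.
Proof. intros; apply ln_le'; lra. Qed.

Lemma ln_le_sub1 w : 0 < w -> ln w <= w - 1.
Proof.
  intros Hw. assert (w <= exp (w - 1)).
  { destruct (Req_dec (w - 1) 0) as [E|E].
    - rewrite E, exp_0. lra.
    - left. pose proof (exp_ineq1 (w-1) E). lra. }
  rewrite <- (ln_exp (w-1)). apply ln_le'; assumption.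
Qed.

Lemma logpow (kappa lam : R) : 0 <= kappa -> 0 < lam ->
  exists C, 0 < C /\ forall v, 0 < v -> Rpower v kappa <= C * exp (lam * v).
Proof.
  intros Hk Hl. destruct (Req_dec kappa 0) as [E|E].
  - exists 1. split; [lra|]. intros v Hv. subst. rewrite Rpower_O by lra.
    assert (1 <= exp (lam * v)) by (rewrite <- exp_0; apply exp_le; nra). lra.
  - exists (Rpower (kappa / lam) kappa). split; [apply Rpower_pos|]. intros v Hv.
    assert (Hkp : 0 < kappa) by lra.
    set (w := lam * v / kappa).
    assert (Hw : 0 < w) by (unfold w; apply Rdiv_lt_0_compat; nra).
    replace v with ((kappa / lam) * w) at 1 by (unfold w; field; lra).
    rewrite <- Rpower_mult_distr by (first [exact Hw | apply Rdiv_lt_0_compat; lra]).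
    apply Rmult_le_compat_l; [left; apply Rpower_pos|].
    unfold Rpower at 1. apply exp_le.
    pose proof (ln_le_sub1 w Hw).
    replace (lam * v) with (kappa * w) by (unfold w; field; lra). nra.
Qed.

Lemma exp_mul_INR j c : exp (INR j * c) = exp c ^ j.
Proof.
  induction j as [|j IH]; simpl pow.
  - simpl. rewrite Rmult_0_l, exp_0. reflexivity.
  - rewrite S_INR, Rmult_plus_distr_r, Rmult_1_l, exp_plus, IH. ring.
Qed.

Lemma geom_sum r k : 0 <= r < 1 -> sumRl (seq 0 k) (fun j => r ^ j) <= 1 / (1 - r).
Proof.
  intros Hr. assert (sumRl (seq 0 k) (fun j => r ^ j) = (1 - r ^ k) / (1 - r)).
  { induction k as [|k IH].
    - simpl. rewrite sumRl_nil. field. lra.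
    - rewrite seq_S, sumRl_app, sumRl_cons, sumRl_nil, IH. simpl. field. lra. }
  rewrite H. apply Rmult_le_compat_r.
  - left; apply Rinv_0_lt_compat; lra.
  - pose proof (pow_le r k (proj1 Hr)). lra.
Qed.

Lemma sR_split m n f : (m <= n)%nat -> sR n f = sR m f + sumRl (seq (S m) (n - m)) f.
Proof.
  intros H. unfold sR. replace n with (m + (n - m))%nat at 1 by lia.
  rewrite seq_app, sumRl_app. replace (1 + m)%nat with (S m) by lia. reflexivity.
Qed.

Lemma sR_nonneg n f : (forall d, 0 <= f d) -> 0 <= sR n f.
Proof. intros H; apply sumRl_nonneg; intros; apply H. Qed.

Lemma sR_mono m n f : (forall d, 0 <= f d) -> (m <= n)%nat -> sR m f <= sR n f.
Proof.
  intros H Hmn. rewrite (sR_split m n f Hmn).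
  assert (0 <= sumRl (seq (S m) (n - m)) f) by (apply sumRl_nonneg; intros; apply H). lra.
Qed.

Lemma pow2_ge n : INR n + 1 <= 2 ^ n.
Proof.
  induction n as [|n IH]; simpl pow; [simpl; lra|]. rewrite S_INR.
  assert (1 <= 2 ^ n) by (apply pow_R1_Rle; lra). lra.
Qed.

Lemma tailG (kappa gam : R) : 0 <= kappa -> gam < 0 ->
  exists K, 0 <= K /\ forall (a : nat -> R) (B : R),
    (forall d, 0 <= a d) -> 0 <= B ->
    (forall t, 2 <= t -> sR (fl t) a <= B * Rpower (ln t) kappa) ->
    forall x, 2 <= x -> forall M, (fl x <= M)%nat ->
      sR M (fun d => a d * Rpower (INR d) gam) - sR (fl x) (fun d => a d * Rpower (INR d) gam)
      <= K * B * (Rpower x gam * Rpower (ln x) kappa).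
Proof.
  intros Hk Hg.
  set (lam := - gam * ln 2 / 2).
  assert (Hlam : 0 < lam) by (unfold lam; pose proof ln2_pos; nra).
  destruct (logpow kappa lam Hk Hlam) as [C [HC HCb]].
  set (r := exp (gam * ln 2 / 2)).
  assert (Hr : 0 <= r < 1).
  { unfold r; split; [left; apply exp_pos|]. rewrite <- exp_0. apply exp_increasing.
    pose proof ln2_pos; nra. }
  exists (C * exp (- gam * ln 2) * (1 / (1 - r))). split.
  { apply Rmult_le_pos; [apply Rmult_le_pos; [lra|left; apply exp_pos]|].
    unfold Rdiv; rewrite Rmult_1_l; left; apply Rinv_0_lt_compat; lra. }
  intros a B Ha HB HA x Hx.
  set (g := fun d => a d * Rpower (INR d) gam).
  assert (Hg0 : forall d, 0 <= g d) by (intros; unfold g; apply Rmult_le_pos; [apply Ha|left; apply Rpower_pos]).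
  set (T := fun j : nat => B * Rpower (x * 2 ^ j) gam * Rpower (ln (x * 2 ^ (S j))) kappa).
  assert (Hx0 : 0 <= x) by lra.
  assert (Hxj : forall j, 2 <= x * 2 ^ j).
  { intros j. assert (1 <= 2 ^ j) by (apply pow_R1_Rle; lra). nra. }
  assert (Hclaim : forall k, sR (fl (x * 2 ^ k)) g - sR (fl x) g <= sumRl (seq 0 k) T).
  { induction k as [|k IH].
    - simpl pow. rewrite Rmult_1_r, sumRl_nil. lra.
    - rewrite seq_S, sumRl_app, sumRl_cons, sumRl_nil. simpl (0 + k)%nat.
      assert (Hle : (fl (x * 2 ^ k) <= fl (x * 2 ^ S k))%nat).
      { apply fl_mono; [pose proof (Hxj k); lra|]. simpl pow.
        pose proof (Hxj k). nra. }
      rewrite (sR_split _ _ g Hle).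
      assert (Hblock : sumRl (seq (S (fl (x * 2 ^ k))) (fl (x * 2 ^ S k) - fl (x * 2 ^ k))) g
                  <= T k).
      { unfold T.
        eapply Rle_trans.
        - apply (sumRl_le _ _ (fun d => Rpower (x * 2 ^ k) gam * a d)).
          intros d Hd. apply in_seq in Hd. unfold g.
          rewrite Rmult_comm. apply Rmult_le_compat_r; [apply Ha|].
          apply Rpower_le_base_neg; [lra|pose proof (Hxj k); lra|].
          pose proof (fl_spec (x * 2 ^ k) ltac:(pose proof (Hxj k); lra)).
          assert (INR (S (fl (x * 2 ^ k))) <= INR d) by (apply le_INR; lia).
          rewrite S_INR in H0. lra.
        - rewrite sumRl_scal.
          assert (Hs : sumRl (seq (S (fl (x * 2 ^ k))) (fl (x * 2 ^ S k) - fl (x * 2 ^ k))) a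
                      <= B * Rpower (ln (x * 2 ^ S k)) kappa).
          { eapply Rle_trans; [|apply HA; apply Hxj].
            rewrite (sR_split _ _ a Hle). pose proof (sR_nonneg (fl (x * 2 ^ k)) a Ha). lra. }
          pose proof (Rpower_pos (x * 2 ^ k) gam).
          replace (B * Rpower (x * 2 ^ k) gam * Rpower (ln (x * 2 ^ S k)) kappa)
            with (Rpower (x * 2 ^ k) gam * (B * Rpower (ln (x * 2 ^ S k)) kappa)) by ring.
          apply Rmult_le_compat_l; lra. }
      lra. }
  assert (HT : forall j, T j <= B * (Rpower x gam * Rpower (ln x) kappa) * (C * exp (- gam * ln 2)) * r ^ j).
  { intros j. unfold T.
    pose proof ln2_pos as Hl2. pose proof (ln_pos_ge2 x Hx) as Hlx.
    assert (H2j : 0 < 2 ^ j) by (apply pow_lt; lra).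
    rewrite <- Rpower_mult_distr by lra.
    assert (Hln : ln (x * 2 ^ S j) = ln x + INR (S j) * ln 2).
    { rewrite ln_mult by (try apply pow_lt; lra). rewrite ln_pow by lra. reflexivity. }
    assert (Hb : Rpower (ln (x * 2 ^ S j)) kappa <= Rpower (INR (S j) + 1) kappa * Rpower (ln x) kappa).
    { rewrite Rpower_mult_distr by (try (rewrite S_INR; pose proof (pos_INR j)); lra).
      apply Rpower_le_base_pos; [lra| |].
      - rewrite Hln. pose proof (pos_INR (S j)). nra.
      - rewrite Hln. pose proof (pos_INR (S j)). nra. }
    assert (H2g : Rpower (2 ^ j) gam = exp (INR j * (gam * ln 2))).
    { unfold Rpower. f_equal. rewrite ln_pow by lra. ring. }
    assert (Hc : Rpower (INR (S j) + 1) kappa <= C * exp (lam * (INR (S j) + 1)))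
      by (apply HCb; pose proof (pos_INR (S j)); lra).
    assert (Hcomb : Rpower (2 ^ j) gam * Rpower (INR (S j) + 1) kappa <= C * exp (- gam * ln 2) * r ^ j).
    { rewrite H2g. unfold r. rewrite <- exp_mul_INR.
      eapply Rle_trans.
      - apply Rmult_le_compat_l; [left; apply exp_pos|exact Hc].
      - replace (exp (INR j * (gam * ln 2)) * (C * exp (lam * (INR (S j) + 1))))
          with (C * (exp (INR j * (gam * ln 2)) * exp (lam * (INR (S j) + 1)))) by ring.
        rewrite <- exp_plus, Rmult_assoc, <- exp_plus.
        apply Rmult_le_compat_l; [lra|]. right. f_equal. unfold lam. rewrite S_INR. field. }
    pose proof (Rpower_pos x gam). pose proof (Rpower_pos (ln x) kappa).
    pose proof (Rpower_pos (2 ^ j) gam). pose proof (Rpower_pos (ln (x * 2 ^ S j)) kappa).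
    pose proof (Rpower_pos (INR (S j) + 1) kappa).
    replace (B * (Rpower x gam * Rpower (2 ^ j) gam) * Rpower (ln (x * 2 ^ S j)) kappa)
      with ((B * Rpower x gam) * (Rpower (2 ^ j) gam * Rpower (ln (x * 2 ^ S j)) kappa)) by ring.
    replace (B * (Rpower x gam * Rpower (ln x) kappa) * (C * exp (- gam * ln 2)) * r ^ j)
      with ((B * Rpower x gam) * ((C * exp (- gam * ln 2) * r ^ j) * Rpower (ln x) kappa)) by ring.
    apply Rmult_le_compat_l; [apply Rmult_le_pos; lra|].
    eapply Rle_trans; [apply Rmult_le_compat_l; [lra|exact Hb]|].
    rewrite <- Rmult_assoc. apply Rmult_le_compat_r; [lra|exact Hcomb]. }
  intros M HM.
  assert (HMk : (M <= fl (x * 2 ^ M))%nat).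
  { apply fl_le_iff; [pose proof (Hxj M); lra|]. pose proof (pow2_ge M).
    assert (1 <= 2 ^ M) by (apply pow_R1_Rle; lra). nra. }
  eapply Rle_trans; [|eapply Rle_trans; [apply (Hclaim M)|]].
  - pose proof (sR_mono _ _ g Hg0 HMk). unfold g in *. lra.
  - eapply Rle_trans; [apply (sumRl_le _ _ _ (fun j _ => HT j))|].
    set (Z := B * (Rpower x gam * Rpower (ln x) kappa) * (C * exp (- gam * ln 2))).
    rewrite sumRl_scal.
    assert (0 <= Z).
    { unfold Z. pose proof (Rpower_pos x gam). pose proof (Rpower_pos (ln x) kappa). pose proof (exp_pos (- gam * ln 2)).
      apply Rmult_le_pos; [apply Rmult_le_pos; [lra|nra]|nra]. }
    eapply Rle_trans; [apply Rmult_le_compat_l; [exact H|apply (geom_sum r M Hr)]|].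
    unfold Z. right. ring.
Qed.

Lemma M_deriv beta t : 0 < t -> derivable_pt_lim (M beta) t (Rpower t beta).
Proof.
  intros Ht. unfold M. destruct (Req_EM_T beta (-1)) as [E|E].
  - subst. replace (Rpower t (-1)) with (/ t).
    + apply derivable_pt_lim_ln; exact Ht.
    + replace (-1) with (- (1)) by ring. rewrite Rpower_Ropp, Rpower_1 by exact Ht. reflexivity.
  - assert (Hb : beta + 1 <> 0) by lra.
    replace (fun x => Rpower x (beta + 1) / (beta + 1)) with
      (mult_real_fct (/ (beta + 1)) (fun x => Rpower x (beta + 1))).
    + replace (Rpower t beta) with (/ (beta + 1) * ((beta + 1) * Rpower t (beta + 1 - 1))).
      * apply derivable_pt_lim_scal. apply derivable_pt_lim_power; exact Ht.
      * replace (beta + 1 - 1) with beta by ring. field. exact Hb.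
    + apply functional_extensionality. intros x. unfold mult_real_fct. field. exact Hb.
Qed.

Lemma M_incr beta a b : 0 < a -> a <= b ->
  (0 <= beta -> (b - a) * Rpower a beta <= M beta b - M beta a <= (b - a) * Rpower b beta) /\
  (beta <= 0 -> (b - a) * Rpower b beta <= M beta b - M beta a <= (b - a) * Rpower a beta).
Proof.
  intros Ha [Hab|Hab].
  - destruct (MVT_cor2 (M beta) (fun t => Rpower t beta) a b Hab) as [c [Hc Hc2]].
    { intros c Hc. apply M_deriv. lra. }
    rewrite Hc. split; intros Hb.
    + assert (Rpower a beta <= Rpower c beta) by (apply Rpower_le_base_pos; lra).
      assert (Rpower c beta <= Rpower b beta) by (apply Rpower_le_base_pos; lra). nra.
    + assert (Rpower c beta <= Rpower a beta) by (apply Rpower_le_base_neg; lra).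
      assert (Rpower b beta <= Rpower c beta) by (apply Rpower_le_base_neg; lra). nra.
  - subst. split; intros; rewrite !Rminus_diag, !Rmult_0_l; lra.
Qed.

Lemma lim_le (u : nat -> R) l k B : Un_cv u l -> (forall m, (m >= k)%nat -> u m <= B) -> l <= B.
Proof.
  intros Hu Hb. destruct (Rle_dec l B) as [|Hn]; [assumption|]. exfalso.
  destruct (Hu (l - B) ltac:(lra)) as [N HN]. specialize (HN (Nat.max N k) ltac:(lia)).
  specialize (Hb (Nat.max N k) ltac:(lia)). unfold Rdist in HN. apply Rabs_def2 in HN. lra.
Qed.

Lemma lim_ge (u : nat -> R) l k B : Un_cv u l -> (forall m, (m >= k)%nat -> B <= u m) -> B <= l.
Proof.
  intros Hu Hb. destruct (Rle_dec B l) as [|Hn]; [assumption|]. exfalso.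
  destruct (Hu (B - l) ltac:(lra)) as [N HN]. specialize (HN (Nat.max N k) ltac:(lia)).
  specialize (Hb (Nat.max N k) ltac:(lia)). unfold Rdist in HN. apply Rabs_def2 in HN. lra.
Qed.

Definition Sb (beta : R) (N : nat) : R := sR N (fun m => Rpower (INR m) beta).

Lemma powsum beta : exists c K, 0 <= K /\ forall y, 1 <= y ->
  Rabs (Sb beta (fl y) - M beta y - c) <= K * Rpower y beta.
Proof.
  set (E := fun n : nat => Sb beta n - M beta (INR n)).
  assert (HE : forall n, (1 <= n)%nat ->
     E (S n) - E n = Rpower (INR (S n)) beta - (M beta (INR (S n)) - M beta (INR n))).
  { intros n Hn. unfold E, Sb. rewrite sR_S. ring. }
  assert (Hn1 : forall n, (1 <= n)%nat -> 0 < INR n) by (intros n Hn; apply lt_0_INR; lia).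
  destruct (Rlt_dec beta 0) as [Hb|Hb].
  -
    set (u := fun k => E (S k)).
    assert (Hstep : forall k, Rpower (INR (S (S k))) beta - Rpower (INR (S k)) beta <= u (S k) - u k <= 0).
    { intros k. unfold u. rewrite HE by lia.
      destruct (M_incr beta (INR (S k)) (INR (S (S k))) (Hn1 (S k) ltac:(lia)) ltac:(apply le_INR; lia)) as [_ H].
      specialize (H ltac:(lra)). rewrite !S_INR in *.
      replace (INR k + 1 + 1 - (INR k + 1)) with 1 in H by ring. lra. }
    assert (Hdec : Un_decreasing u) by (intros k; pose proof (Hstep k); lra).
    assert (Hlow : forall k, u 0%nat - 1 + Rpower (INR (S k)) beta <= u k).
    { induction k as [|k IH].
      - simpl INR. rewrite Rpower_one. lra.
      - pose proof (Hstep k). lra. }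
    assert (Hlb : has_lb u).
    { exists (- (u 0%nat - 1)). intros z [k Hz]. subst z. pose proof (Hlow k).
      pose proof (Rpower_pos (INR (S k)) beta). unfold opp_seq. lra. }
    destruct (decreasing_cv u Hdec Hlb) as [c Hc].
    assert (Hdiff : forall k m, (k <= m)%nat -> u k - u m <= Rpower (INR (S k)) beta - Rpower (INR (S m)) beta).
    { intros k m Hkm. induction Hkm as [|m Hkm IH]; [lra|]. pose proof (Hstep m). lra. }
    assert (Hc1 : forall k, c <= u k).
    { intros k. apply (lim_le u c k); [exact Hc|]. intros m Hm.
      clear Hc. induction Hm as [|m Hm IH]; [lra|]. pose proof (Hstep m). lra. }
    assert (Hc2 : forall k, u k - Rpower (INR (S k)) beta <= c).
    { intros k. apply (lim_ge u c k); [exact Hc|]. intros m Hm.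
      pose proof (Hdiff k m Hm). pose proof (Rpower_pos (INR (S m)) beta). lra. }
    exists c, (Rpower (/ 2) beta). split; [left; apply Rpower_pos|].
    intros y Hy. set (n := fl y).
    pose proof (fl_spec y ltac:(lra)) as Hfl. fold n in Hfl.
    assert (Hn : (1 <= n)%nat) by (apply fl_le_iff; simpl; lra).
    assert (Hun : u (n - 1)%nat = E n) by (unfold u; f_equal; lia).
    pose proof (Hc1 (n-1)%nat). pose proof (Hc2 (n-1)%nat).
    replace (S (n - 1)) with n in * by lia. rewrite Hun in *.
    destruct (M_incr beta (INR n) y (Hn1 n Hn) (proj1 Hfl)) as [_ HM].
    specialize (HM ltac:(lra)).
    assert (HMb : (y - INR n) * Rpower (INR n) beta <= Rpower (INR n) beta).
    { pose proof (Rpower_pos (INR n) beta). nra. }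
    pose proof (Rpower_pos y beta). pose proof (Rpower_pos (INR n) beta).
    assert (Hyn : Rpower (INR n) beta <= Rpower (/ 2) beta * Rpower y beta).
    { rewrite Rpower_mult_distr by lra. apply Rpower_le_base_neg; [lra| |].
      - assert (0 < y) by lra. nra.
      - assert (1 <= INR n) by (replace 1 with (INR 1) by reflexivity; apply le_INR; lia). lra. }
    assert (0 <= (y - INR n) * Rpower y beta) by nra. unfold E in *. apply Rabs_le. lra.
  -
    exists (E 1%nat), 1. split; [lra|].
    assert (Hst : forall n, (1 <= n)%nat -> 0 <= E (S n) - E n <= Rpower (INR (S n)) beta - Rpower (INR n) beta).
    { intros n Hn. rewrite HE by exact Hn.
      destruct (M_incr beta (INR n) (INR (S n)) (Hn1 n Hn) ltac:(apply le_INR; lia)) as [H _].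
      specialize (H ltac:(lra)). rewrite !S_INR in *.
      replace (INR n + 1 - INR n) with 1 in H by ring. lra. }
    assert (Hgrow : forall n, (1 <= n)%nat -> 0 <= E n - E 1%nat <= Rpower (INR n) beta - 1).
    { intros n Hn. induction Hn as [|n Hn IH].
      - simpl INR. rewrite Rpower_one. lra.
      - pose proof (Hst n Hn). lra. }
    intros y Hy. set (n := fl y).
    pose proof (fl_spec y ltac:(lra)) as Hfl. fold n in Hfl.
    assert (Hn : (1 <= n)%nat) by (apply fl_le_iff; simpl; lra).
    pose proof (Hgrow n Hn).
    destruct (M_incr beta (INR n) y (Hn1 n Hn) (proj1 Hfl)) as [HM _].
    specialize (HM ltac:(lra)).
    pose proof (Rpower_pos y beta). pose proof (Rpower_pos (INR n) beta).
    assert (Rpower (INR n) beta <= Rpower y beta) by (apply Rpower_le_base_pos; [lra|apply Hn1; exact Hn|lra]).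
    assert ((y - INR n) * Rpower y beta <= Rpower y beta) by nra.
    assert (0 <= (y - INR n) * Rpower (INR n) beta) by nra.
    unfold E in *. apply Rabs_le. lra.
Qed.

Lemma divS N d : (1 <= d)%nat ->
  if (S N mod d =? 0)%nat then (S N / d = S (N / d))%nat else (S N / d = N / d)%nat.
Proof.
  intros Hd. pose proof (Nat.div_mod N d ltac:(lia)) as HN.
  pose proof (Nat.mod_upper_bound N d ltac:(lia)) as Hr.
  set (q := (N / d)%nat) in *. set (r := (N mod d)%nat) in *.
  destruct (Nat.eq_dec (S r) d) as [E|E].
  - assert (Hm : (S N mod d = 0)%nat).
    { symmetry. apply (Nat.mod_unique (S N) d (S q) 0); lia. }
    rewrite Hm. simpl. symmetry. apply (Nat.div_unique (S N) d (S q) 0); lia.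
  - assert (Hm : (S N mod d = S r)%nat).
    { symmetry. apply (Nat.mod_unique (S N) d q (S r)); lia. }
    rewrite Hm. simpl. symmetry. apply (Nat.div_unique (S N) d q (S r)); lia.
Qed.

Lemma swap_gen (F : nat -> nat -> R) N :
  sR N (fun n => sumRl (seq 1 n) (fun d => if divb d n then F d (n / d)%nat else 0))
  = sR N (fun d => sR (N / d) (F d)).
Proof.
  induction N as [|N IH]; [reflexivity|].
  rewrite sR_S, IH.
  assert (H1 : sR N (fun d => sR (N / d) (F d)) = sR (S N) (fun d => sR (N / d) (F d))).
  { rewrite sR_S. rewrite (Nat.div_small N (S N)) by lia. rewrite sR_0. ring. }
  rewrite H1.
  transitivity (sumRl (seq 1 (S N)) (fun d => sR (N / d) (F d) +
      (if divb d (S N) then F d (S N / d)%nat else 0))).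
  { rewrite sumRl_plus. reflexivity. }
  apply sumRl_ext. intros d Hd. apply in_seq in Hd.
  pose proof (divS N d ltac:(lia)) as Hdiv. unfold divb.
  destruct (S N mod d =? 0)%nat.
  - rewrite Hdiv, sR_S. ring.
  - rewrite Hdiv. ring.
Qed.

Lemma swapR (h : nat -> R) beta N :
  sR N (fun n => Rpower (INR n) beta * sumRl (seq 1 n) (fun d => if divb d n then h d else 0))
  = sR N (fun d => Rpower (INR d) beta * Sb beta (N / d) * h d).
Proof.
  transitivity (sR N (fun n => sumRl (seq 1 n) (fun d => if divb d n then
      (h d * Rpower (INR d) beta * Rpower (INR (n / d)) beta) else 0))).
  - unfold sR at 1 2. apply sumRl_ext. intros n Hn. apply in_seq in Hn.
    rewrite <- sumRl_scal. apply sumRl_ext. intros d Hd. apply in_seq in Hd.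
    unfold divb. destruct (Nat.eqb_spec (n mod d) 0) as [E|E]; [|ring].
    pose proof (Nat.div_mod n d ltac:(lia)) as Hnd. rewrite E, Nat.add_0_r in Hnd.
    assert (HI : INR n = INR d * INR (n / d)) by (rewrite <- mult_INR; f_equal; exact Hnd).
    assert (Hq : (1 <= n / d)%nat) by (destruct (n / d)%nat; lia).
    rewrite HI, <- Rpower_mult_distr.
    + ring.
    + apply lt_0_INR; lia.
    + apply lt_0_INR; lia.
  - rewrite (swap_gen (fun d m => h d * Rpower (INR d) beta * Rpower (INR m) beta)).
    unfold sR at 1 2. apply sumRl_ext. intros d Hd. unfold Sb, sR. rewrite sumRl_scal. ring.
Qed.

Lemma swapC (theta : nat -> Cx) beta N :
  sC N (fun n => Cscal (Rpower (INR n) beta) (phi_theta theta n))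
  = sC N (fun d => Cscal (Rpower (INR d) beta * Sb beta (N / d)) (theta d)).
Proof.
  unfold sC. Csplit.
  - pose proof (swapR (fun d => fst (theta d)) beta N) as H. unfold sR in H.
    rewrite <- H. apply sumRl_ext. intros n Hn. f_equal.
    unfold phi_theta. fold (sumCl (seq 1 n) (fun d => if divb d n then theta d else Czero)).
    rewrite sumCl_fst. apply sumRl_ext. intros d _. destruct (divb d n); reflexivity.
  - pose proof (swapR (fun d => snd (theta d)) beta N) as H. unfold sR in H.
    rewrite <- H. apply sumRl_ext. intros n Hn. f_equal.
    unfold phi_theta. fold (sumCl (seq 1 n) (fun d => if divb d n then theta d else Czero)).
    rewrite sumCl_snd. apply sumRl_ext. intros d _. destruct (divb d n); reflexivity.
Qed.

Lemma fl_div x d : 0 <= x -> (1 <= d)%nat -> fl (x / INR d) = (fl x / d)%nat.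
Proof.
  intros Hx Hd.
  assert (HdR : 0 < INR d) by (apply lt_0_INR; lia).
  assert (Hxd : 0 <= x / INR d) by (apply Rmult_le_pos; [lra|left; apply Rinv_0_lt_compat; lra]).
  assert (Hiff : forall m, (m <= fl (x / INR d))%nat <-> (m <= fl x / d)%nat).
  { intros m. rewrite (fl_le_iff _ _ Hxd). split; intros H.
    - apply Nat.div_le_lower_bound; [lia|]. apply fl_le_iff; [exact Hx|].
      rewrite mult_INR. apply (Rmult_le_compat_l (INR d)) in H; [|lra].
      replace (INR d * (x / INR d)) with x in H by (field; lra). lra.
    - assert (Hmd : (d * m <= fl x)%nat).
      { eapply Nat.le_trans; [apply Nat.mul_le_mono_l; exact H|]. apply Nat.Div0.mul_div_le. }
      apply (fl_le_iff x _ Hx) in Hmd. rewrite mult_INR in Hmd.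
      apply (Rmult_le_reg_l (INR d)); [lra|].
      replace (INR d * (x / INR d)) with x by (field; lra). lra. }
  apply Nat.le_antisymm; apply Hiff; lia.
Qed.

Lemma sC_split N M u : (N <= M)%nat -> sC M u = Cadd (sC N u) (sumCl (seq (S N) (M - N)) u).
Proof.
  intros H. unfold sC. replace M with (N + (M - N))%nat at 1 by lia.
  rewrite seq_app, sumCl_app. replace (1 + N)%nat with (S N) by lia. reflexivity.
Qed.

Lemma sC_diff_le u w N M : (N <= M)%nat -> (forall d, (N < d)%nat -> Cnorm (u d) <= w d) ->
  Cnorm (Csub (sC M u) (sC N u)) <= sR M w - sR N w.
Proof.
  intros H Hw. rewrite (sC_split N M u H), (sR_split N M w H).
  replace (Csub (Cadd (sC N u) (sumCl (seq (S N) (M - N)) u)) (sC N u)) with (sumCl (seq (S N) (M - N)) u)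
    by (destruct (sC N u), (sumCl (seq (S N) (M - N)) u); Csplit; ring).
  eapply Rle_trans; [apply Cnorm_sum|].
  replace (sR N w + sumRl (seq (S N) (M - N)) w - sR N w) with (sumRl (seq (S N) (M - N)) w) by ring.
  apply sumRl_le. intros d Hd. apply in_seq in Hd. apply Hw. lia.
Qed.

Lemma Ccauchy (u : nat -> Cx) :
  (forall eps, 0 < eps -> exists N0, forall N M, (N0 <= N)%nat -> (N <= M)%nat -> Cnorm (Csub (u M) (u N)) < eps) ->
  exists S, Ccv u S.
Proof.
  intros H.
  assert (Hre : Cauchy_crit (fun n => fst (u n))).
  { intros eps Heps. destruct (H eps Heps) as [N0 HN0]. exists N0. intros n m Hn Hm.
    unfold Rdist. destruct (le_lt_dec n m) as [Hnm|Hnm].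
    - pose proof (HN0 n m Hn Hnm). pose proof (Cnorm_fst (Csub (u m) (u n))).
      simpl in H1. rewrite Rabs_minus_sym. lra.
    - pose proof (HN0 m n Hm ltac:(lia)). pose proof (Cnorm_fst (Csub (u n) (u m))).
      simpl in H1. lra. }
  assert (Him : Cauchy_crit (fun n => snd (u n))).
  { intros eps Heps. destruct (H eps Heps) as [N0 HN0]. exists N0. intros n m Hn Hm.
    unfold Rdist. destruct (le_lt_dec n m) as [Hnm|Hnm].
    - pose proof (HN0 n m Hn Hnm). pose proof (Cnorm_snd (Csub (u m) (u n))).
      simpl in H1. rewrite Rabs_minus_sym. lra.
    - pose proof (HN0 m n Hm ltac:(lia)). pose proof (Cnorm_snd (Csub (u n) (u m))).
      simpl in H1. lra. }
  destruct (R_complete _ Hre) as [lr Hlr]. destruct (R_complete _ Him) as [li Hli].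
  exists (lr, li). intros eps Heps.
  destruct (Hlr (eps/2) ltac:(lra)) as [N1 HN1]. destruct (Hli (eps/2) ltac:(lra)) as [N2 HN2].
  exists (Nat.max N1 N2). intros n Hn.
  specialize (HN1 n ltac:(lia)). specialize (HN2 n ltac:(lia)). unfold Rdist in *.
  eapply Rle_lt_trans; [apply Cnorm_le_sum|]. simpl. lra.
Qed.

Lemma Ctail (u : nat -> Cx) S N b : Ccv u S ->
  (forall M, (N <= M)%nat -> Cnorm (Csub (u M) (u N)) <= b) -> Cnorm (Csub (u N) S) <= b.
Proof.
  intros Hc Hb. apply Rle_plus_epsilon. intros eps Heps.
  destruct (Hc eps Heps) as [N1 HN1]. set (M := Nat.max N N1).
  specialize (HN1 M ltac:(lia)). specialize (Hb M ltac:(lia)).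
  eapply Rle_trans; [apply (Cnorm_sub_triang _ (u M))|].
  rewrite Cnorm_sub_sym. lra.
Qed.

Lemma vanish (gam kappa K0 : R) : gam < 0 -> 0 <= kappa -> 0 <= K0 ->
  forall eps, 0 < eps -> exists N0 : nat, (2 <= N0)%nat /\ forall x, INR N0 <= x ->
    K0 * (Rpower x gam * Rpower (ln x) kappa) < eps.
Proof.
  intros Hg Hk HK eps Heps.
  destruct (logpow kappa (- gam / 2) Hk ltac:(lra)) as [C [HC HCb]].
  set (e1 := eps / (K0 * C + 1)).
  assert (He1 : 0 < e1) by (unfold e1; apply Rdiv_lt_0_compat; [lra|nra]).
  set (x0 := exp (ln e1 * 2 / gam)).
  exists (Nat.max 2 (S (fl x0))). split; [lia|]. intros x Hx.
  assert (Hx2 : 2 <= x).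
  { eapply Rle_trans; [|exact Hx]. replace 2 with (INR 2) by (simpl; lra). apply le_INR; lia. }
  assert (Hxx0 : x0 < x).
  { pose proof (fl_spec x0 ltac:(unfold x0; left; apply exp_pos)).
    assert (INR (S (fl x0)) <= INR (Nat.max 2 (S (fl x0)))) by (apply le_INR; lia).
    rewrite S_INR in H0. lra. }
  assert (Hlx : 0 < ln x) by (pose proof ln2_pos; pose proof (ln_pos_ge2 x Hx2); lra).
  specialize (HCb (ln x) Hlx).
  assert (Hxg : Rpower x gam * exp (- gam / 2 * ln x) = exp (gam / 2 * ln x)).
  { unfold Rpower. rewrite <- exp_plus. f_equal. field. }
  assert (Hsmall : exp (gam / 2 * ln x) < e1).
  { rewrite <- (exp_ln e1) by exact He1. apply exp_increasing.
    assert (ln x0 < ln x) by (apply ln_increasing; [unfold x0; apply exp_pos|exact Hxx0]).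
    unfold x0 in H. rewrite ln_exp in H.
    apply (Rmult_lt_compat_l (- gam / 2)) in H; [|lra].
    replace (- gam / 2 * (ln e1 * 2 / gam)) with (- ln e1) in H by (field; lra). lra. }
  pose proof (Rpower_pos x gam). pose proof (Rpower_pos (ln x) kappa).
  assert (Rpower x gam * Rpower (ln x) kappa <= C * exp (gam / 2 * ln x)).
  { rewrite <- Hxg. replace (C * (Rpower x gam * exp (- gam / 2 * ln x))) with
       (Rpower x gam * (C * exp (- gam / 2 * ln x))) by ring.
    apply Rmult_le_compat_l; lra. }
  assert (K0 * (Rpower x gam * Rpower (ln x) kappa) <= K0 * C * e1).
  { rewrite Rmult_assoc. apply Rmult_le_compat_l; [lra|].
    eapply Rle_trans; [exact H1|]. apply Rmult_le_compat_l; lra. }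
  assert (K0 * C * e1 < eps).
  { unfold e1. apply (Rmult_lt_reg_r (K0 * C + 1)); [nra|].
    field_simplify; [|nra]. nra. }
  lra.
Qed.

Definition tailprop (kappa gam K B : R) (a : nat -> R) : Prop :=
  forall x, 2 <= x -> forall M, (fl x <= M)%nat ->
      sR M (fun d => a d * Rpower (INR d) gam) - sR (fl x) (fun d => a d * Rpower (INR d) gam)
      <= K * B * (Rpower x gam * Rpower (ln x) kappa).

Lemma series_conv (kappa gam K B : R) (a : nat -> R) (u : nat -> Cx) :
  0 <= kappa -> gam < 0 -> 0 <= K -> 0 <= B ->
  tailprop kappa gam K B a ->
  (forall d, (1 <= d)%nat -> Cnorm (u d) <= a d * Rpower (INR d) gam) ->
  exists S, Ccv (fun N => sC N u) S /\
    forall x, 2 <= x -> Cnorm (Csub (sC (fl x) u) S) <= K * B * (Rpower x gam * Rpower (ln x) kappa).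
Proof.
  intros Hk Hg HK HB Ht Hu.
  assert (Hd : forall x, 2 <= x -> forall M, (fl x <= M)%nat ->
     Cnorm (Csub (sC M u) (sC (fl x) u)) <= K * B * (Rpower x gam * Rpower (ln x) kappa)).
  { intros x Hx M HM. eapply Rle_trans; [apply (sC_diff_le u (fun d => a d * Rpower (INR d) gam)); [exact HM|]|].
    - intros d Hd; apply Hu; lia.
    - apply Ht; assumption. }
  destruct (Ccauchy (fun N => sC N u)) as [S HS].
  { intros eps Heps. destruct (vanish gam kappa (K * B) Hg Hk ltac:(nra) eps Heps) as [N0 [HN0 HN0b]].
    exists N0. intros N M HN HM.
    assert (Hx : 2 <= INR N) by (replace 2 with (INR 2) by (simpl; lra); apply le_INR; lia).
    pose proof (Hd (INR N) Hx M). rewrite fl_INR in H. specialize (H HM).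
    eapply Rle_lt_trans; [exact H|]. apply HN0b. apply le_INR; lia. }
  exists S. split; [exact HS|]. intros x Hx. apply (Ctail (fun N => sC N u) S (fl x)); [exact HS|]. intros M HM. apply Hd; assumption.
Qed.

Definition aT (theta : nat -> Cx) (sigma : R) (d : nat) : R := Cnorm (theta d) * Rpower (INR d) (- sigma).

Lemma aT_nonneg theta sigma d : 0 <= aT theta sigma d.
Proof. unfold aT. apply Rmult_le_pos; [apply Cnorm_nonneg|left; apply Rpower_pos]. Qed.

Lemma Cnorm_Cone : Cnorm Cone = 1.
Proof. unfold Cnorm; simpl. replace (1 * 1 + 0 * 0) with 1 by ring. apply sqrt_1. Qed.

Lemma Dl_zero theta : multiplicative_sqfree theta -> forall N d, (1 <= d <= N)%nat ->
  ~ In d (Dl N) -> theta d = Czero.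
Proof.
  intros [_ [_ Hz]] N d Hd Hn. apply Hz; [lia|]. intros Hsq. apply Hn.
  apply Dl_complete; [lia|exact Hsq|]. intros q Hq Hqd.
  assert (q <= d)%nat by (apply Nat.divide_pos_le; [lia|exact Hqd]). lia.
Qed.

Lemma sum_to_Dl (f : nat -> R) N : (forall d, (1 <= d <= N)%nat -> ~ In d (Dl N) -> f d = 0) ->
  sR N f = sumRl (filter (fun d => (d <=? N)%nat) (Dl N)) f.
Proof.
  intros Hz. unfold sR. apply sumRl_incl_eq.
  - apply NoDup_filter, Dl_nodup.
  - apply seq_NoDup.
  - intros d Hd. apply filter_In in Hd. destruct Hd as [Hd Hle]. apply Nat.leb_le in Hle.
    destruct (Dl_good N d Hd). apply in_seq. lia.
  - intros d Hd Hn. apply in_seq in Hd. apply Hz; [lia|]. intros Hin. apply Hn.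
    apply filter_In. split; [exact Hin|]. apply Nat.leb_le. lia.
Qed.

Lemma aT_mult theta sigma : multiplicative_sqfree theta ->
  forall x y, (1 <= x)%nat -> (1 <= y)%nat -> Nat.gcd x y = 1%nat ->
  aT theta sigma (x * y) = aT theta sigma x * aT theta sigma y.
Proof.
  intros [_ [Hm _]] x y Hx Hy Hg. unfold aT. rewrite Hm by assumption. rewrite Cnorm_mul.
  rewrite mult_INR, <- Rpower_mult_distr by (apply lt_0_INR; lia). ring.
Qed.

Lemma aT_one theta sigma : multiplicative_sqfree theta -> aT theta sigma 1 = 1.
Proof. intros [H1 _]. unfold aT. rewrite H1, Cnorm_Cone. simpl INR. rewrite Rpower_one. ring. Qed.

Lemma a_bound theta sigma kappa A : multiplicative_sqfree theta -> Condition1 theta sigma kappa A ->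
  forall t, 2 <= t -> sR (fl t) (aT theta sigma) <= exp A * Rpower (ln t) kappa.
Proof.
  intros Hm Hc t Ht. set (N := fl t).
  rewrite (sum_to_Dl _ N).
  2:{ intros d Hd Hn. unfold aT. rewrite (Dl_zero theta Hm N d Hd Hn), Cnorm_Czero. ring. }
  apply Rle_trans with (sumRl (Dl N) (aT theta sigma)).
  - rewrite (sumRl_filter (fun d => (d <=? N)%nat) (Dl N) (aT theta sigma)).
    assert (0 <= sumRl (filter (fun x => negb (x <=? N)%nat) (Dl N)) (aT theta sigma))
      by (apply sumRl_nonneg; intros; apply aT_nonneg).
    apply (Rplus_le_compat_l (sumRl (filter (fun d => (d <=? N)%nat) (Dl N)) (aT theta sigma))) in H.
    rewrite Rplus_0_r in H. exact H.
  - eapply Rle_trans; [apply Dl_sum_exp|].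
    + apply aT_one; exact Hm.
    + intros; apply aT_nonneg.
    + apply aT_mult; exact Hm.
    + specialize (Hc t Ht). unfold sumR_primes_le in Hc. rewrite sumR_le_eq in Hc by lra.
      fold N in Hc.
      replace (exp A * Rpower (ln t) kappa) with (exp (kappa * ln (ln t) + A)).
      * apply exp_le. eapply Rle_trans; [|exact Hc]. right. unfold sR. apply sumRl_ext.
        intros d _. unfold aT. reflexivity.
      * unfold Rpower. rewrite exp_plus. ring.
Qed.

Definition fT (theta : nat -> Cx) (d : nat) : Cx := Cscal (/ INR d) (theta d).

Lemma fT_mult theta : multiplicative_sqfree theta -> multC (fT theta).
Proof.
  intros [H1 [Hm _]]. split.
  - unfold fT. rewrite H1. simpl INR. rewrite Rinv_1. Csplit; ring.
  - intros a b Ha Hb Hg. unfold fT. rewrite Hm by assumption. rewrite mult_INR.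
    assert (0 < INR a) by (apply lt_0_INR; lia). assert (0 < INR b) by (apply lt_0_INR; lia).
    rewrite Rinv_mult. destruct (theta a), (theta b). Csplit; field; lra.
Qed.

Lemma prod_eq theta N : multiplicative_sqfree theta ->
  prodC_primes_le (INR N) (fun p => Cadd Cone (Cscal (/ INR p) (theta p)))
  = Cadd (sC N (fT theta)) (sumCl (filter (fun d => negb (d <=? N)%nat) (Dl N)) (fT theta)).
Proof.
  intros Hm. rewrite prodC_le_eq.
  transitivity (sumCl (Dl N) (fT theta)).
  { rewrite (Dl_sum_prod (fT theta) N (fT_mult theta Hm)). reflexivity. }
  assert (Hz : forall d, (1 <= d <= N)%nat -> ~ In d (Dl N) -> fT theta d = Czero).
  { intros d Hd Hn. unfold fT. rewrite (Dl_zero theta Hm N d Hd Hn). Csplit; ring. }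
  Csplit.
  - rewrite (sumRl_filter (fun d => (d <=? N)%nat)). f_equal. unfold sC. rewrite sumCl_fst.
    symmetry. apply (sum_to_Dl (fun n => fst (fT theta n))). intros d Hd Hn. rewrite (Hz d Hd Hn). reflexivity.
  - rewrite (sumRl_filter (fun d => (d <=? N)%nat)). f_equal. unfold sC. rewrite sumCl_snd.
    symmetry. apply (sum_to_Dl (fun n => snd (fT theta n))). intros d Hd Hn. rewrite (Hz d Hd Hn). reflexivity.
Qed.

Lemma prod_tail_le theta N : exists Mx, (N <= Mx)%nat /\
  Cnorm (sumCl (filter (fun d => negb (d <=? N)%nat) (Dl N)) (fT theta))
  <= sR Mx (fun d => Cnorm (fT theta d)) - sR N (fun d => Cnorm (fT theta d)).
Proof.
  destruct (list_bound (Dl N)) as [Mx HMx]. exists (Nat.max N Mx). split; [lia|].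
  eapply Rle_trans; [apply Cnorm_sum|].
  rewrite (sR_split N (Nat.max N Mx)) by lia.
  match goal with |- _ <= ?a + ?b - ?c => replace (a + b - c) with b by ring end.
  apply sumRl_incl_le.
  - apply NoDup_filter, Dl_nodup.
  - intros d Hd. apply filter_In in Hd. destruct Hd as [Hd Hgt].
    apply Bool.negb_true_iff, Nat.leb_gt in Hgt. specialize (HMx d Hd). apply in_seq. lia.
  - intros; apply Cnorm_nonneg.
Qed.

Lemma Rinv_Rpower d : 0 < d -> / d = Rpower d (-1).
Proof. intros Hd. unfold Rpower. replace (-1 * ln d) with (- ln d) by ring. rewrite exp_Ropp, exp_ln; auto. Qed.

Lemma Rpower_div x d y : 0 < x -> 0 < d -> Rpower (x / d) y = Rpower x y * Rpower d (- y).
Proof.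
  intros Hx Hd. unfold Rpower, Rdiv. rewrite ln_mult, ln_Rinv by (try apply Rinv_0_lt_compat; lra).
  rewrite <- exp_plus. f_equal. ring.
Qed.

Lemma INR_pos1 d : (1 <= d)%nat -> 0 < INR d.
Proof. intros; apply lt_0_INR; lia. Qed.

Lemma norm_theta theta sigma d : (1 <= d)%nat -> Cnorm (theta d) = aT theta sigma d * Rpower (INR d) sigma.
Proof.
  intros Hd. unfold aT. rewrite Rmult_assoc, <- Rpower_plus.
  replace (- sigma + sigma) with 0 by ring. rewrite Rpower_O by (apply INR_pos1; exact Hd). ring.
Qed.

Lemma fT_norm theta sigma d : (1 <= d)%nat -> Cnorm (fT theta d) = aT theta sigma d * Rpower (INR d) (sigma - 1).
Proof.
  intros Hd. unfold fT. rewrite Cnorm_scal, (norm_theta theta sigma d Hd).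
  pose proof (INR_pos1 d Hd).
  rewrite Rabs_right by (left; apply Rinv_0_lt_compat; lra).
  rewrite Rinv_Rpower by lra. replace (sigma - 1) with (sigma + -1) by ring. rewrite Rpower_plus. ring.
Qed.

Lemma ln_le_pow u dl : 1 <= u -> 0 < dl -> ln u <= Rpower u dl / dl.
Proof.
  intros Hu Hd. pose proof (Rpower_pos u dl) as Hw.
  pose proof (ln_le_sub1 _ Hw). rewrite ln_Rpower in H.
  apply (Rmult_le_reg_l dl); [lra|]. unfold Rdiv. field_simplify; lra.
Qed.

Lemma sRdiff_le N M w g : (N <= M)%nat -> (forall d, (N < d)%nat -> w d <= g d) ->
  sR M w - sR N w <= sR M g - sR N g.
Proof.
  intros H Hw. rewrite (sR_split N M w H), (sR_split N M g H).
  assert (sumRl (seq (S N) (M - N)) w <= sumRl (seq (S N) (M - N)) g).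
  { apply sumRl_le. intros d Hd. apply in_seq in Hd. apply Hw. lia. }
  lra.
Qed.

Lemma sC_linear3 N (f1 f2 f3 : nat -> R) (c : R) (theta : nat -> Cx) (F : nat -> R) :
  (forall d, F d = f1 d + c * f2 d + f3 d) ->
  sC N (fun d => Cscal (F d) (theta d)) =
  Cadd (sC N (fun d => Cscal (f1 d) (theta d)))
       (Cadd (Cscal c (sC N (fun d => Cscal (f2 d) (theta d)))) (sC N (fun d => Cscal (f3 d) (theta d)))).
Proof.
  intros HF. unfold sC. Csplit.
  - rewrite <- sumRl_scal, <- !sumRl_plus. apply sumRl_ext. intros d _. rewrite HF. simpl. ring.
  - rewrite <- sumRl_scal, <- !sumRl_plus. apply sumRl_ext. intros d _. rewrite HF. simpl. ring.
Qed.

Lemma M_neq beta y : beta <> -1 -> M beta y = Rpower y (beta + 1) / (beta + 1).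
Proof. intros H. unfold M. destruct (Req_EM_T beta (-1)); [contradiction|reflexivity]. Qed.
Lemma M_eq beta y : beta = -1 -> M beta y = ln y.
Proof. intros H. unfold M. destruct (Req_EM_T beta (-1)); [reflexivity|contradiction]. Qed.
Lemma Cscal_sub c u w : Csub (Cscal c u) (Cscal c w) = Cscal c (Csub u w).
Proof. destruct u, w; Csplit; ring. Qed.

Theorem mainTheorem4 :
  forall sigma kappa A beta : R,
    0 <= sigma -> sigma < 1 -> 0 <= kappa -> 0 <= A ->
    exists K : R,
      forall theta : nat -> Cx,
        multiplicative_sqfree theta ->
        Condition1 theta sigma kappa A ->
        (exists L : R,
           Un_cv (fun N => sumR_primes_le (INR N) (fun p => Cnorm (theta p) / INR p)) L) /\
        exists S : Cx,
          Ccv (fun N => prodC_primes_le (INR N)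
                          (fun p => Cadd Cone (Cscal (/ INR p) (theta p)))) S /\
          exists C : Cx,
            forall x : R, 2 <= x ->
              Cnorm (Csub (sumC_le x (fun n => Cscal (Rpower (INR n) beta) (phi_theta theta n)))
                          (Cadd (Cscal (M beta x) S) C))
              <= K * (Rpower x (sigma + beta) * Rpower (ln x) kappa).
Proof.
  intros sigma kappa A beta Hs0 Hs1 Hk HA.
  destruct (powsum beta) as [c [Kb [HKb Hpow]]].
  destruct (tailG kappa (sigma - 1) Hk ltac:(lra)) as [K1 [HK1 HT1]].
  destruct (tailG kappa ((sigma - 1) / 2) Hk ltac:(lra)) as [K2 [HK2 HT2]].
  assert (HK3 : exists K3, 0 <= K3 /\ (sigma + beta < 0 -> forall a B, (forall d, 0 <= a d) -> 0 <= B ->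
     (forall t, 2 <= t -> sR (fl t) a <= B * Rpower (ln t) kappa) -> tailprop kappa (sigma + beta) K3 B a)).
  { destruct (Rlt_dec (sigma + beta) 0) as [H|H].
    - destruct (tailG kappa (sigma + beta) Hk H) as [K3 [HK3 HT3]]. exists K3. split; [exact HK3|].
      intros _. exact HT3.
    - exists 0. split; [lra|]. intros; lra. }
  destruct HK3 as [K3 [HK3 HT3]].
  set (eA := exp A). set (dl := (1 - sigma) / 2).
  assert (HeA : 0 < eA) by apply exp_pos. assert (Hdl : 0 < dl) by (unfold dl; lra).
  exists (eA * (Kb + Rabs c + Rabs c * K3 + K1 * Rabs (/ (beta + 1)) + / dl * K2)).
  intros theta Hm Hc.
  set (a := aT theta sigma).
  assert (Ha0 : forall d, 0 <= a d) by (intros; apply aT_nonneg).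
  assert (HaB : forall t, 2 <= t -> sR (fl t) a <= eA * Rpower (ln t) kappa) by (apply a_bound; assumption).
  pose proof (HT1 a eA Ha0 (Rlt_le _ _ HeA) HaB) as T1.
  pose proof (HT2 a eA Ha0 (Rlt_le _ _ HeA) HaB) as T2.
  destruct (series_conv kappa (sigma - 1) K1 eA a (fT theta) Hk ltac:(lra) HK1 (Rlt_le _ _ HeA) T1)
    as [SG [HS HSt]].
  { intros d Hd. rewrite (fT_norm theta sigma d Hd). right; reflexivity. }
  split.
  {
    set (v := fun N => sumR_primes_le (INR N) (fun p => Cnorm (theta p) / INR p)).
    set (g := fun d => a d * Rpower (INR d) (sigma - 1)).
    assert (Hv : forall N, v N = sR N (fun p => if primeb p then Cnorm (theta p) / INR p else 0)).
    { intros N. unfold v, sumR_primes_le. rewrite sumR_le_eq by apply pos_INR. rewrite fl_INR. reflexivity. }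
    assert (Hvg : forall N, v N <= sR N g).
    { intros N. rewrite Hv. unfold sR. apply sumRl_le. intros d Hd. apply in_seq in Hd.
      unfold g, a. rewrite <- (fT_norm theta sigma d) by lia. unfold fT. rewrite Cnorm_scal.
      pose proof (INR_pos1 d ltac:(lia)).
      rewrite Rabs_right by (left; apply Rinv_0_lt_compat; lra).
      destruct (primeb d); [right; unfold Rdiv; ring|].
      apply Rmult_le_pos; [left; apply Rinv_0_lt_compat; lra|apply Cnorm_nonneg]. }
    assert (Hg0 : forall d, 0 <= g d) by (intros; unfold g; apply Rmult_le_pos; [apply Ha0|left; apply Rpower_pos]).
    assert (Hgrow : Un_growing v).
    { intros N. rewrite !Hv, sR_S. assert (0 <= (if primeb (S N) then Cnorm (theta (S N)) / INR (S N) else 0)).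
      { destruct (primeb (S N)); [|lra]. unfold Rdiv. apply Rmult_le_pos; [apply Cnorm_nonneg|].
        left; apply Rinv_0_lt_compat; apply INR_pos1; lia. }
      lra. }
    assert (Hub : has_ub v).
    { exists (sR 2 g + K1 * eA * (Rpower 2 (sigma - 1) * Rpower (ln 2) kappa)).
      intros z [N Hz]. subst z. eapply Rle_trans; [apply Hvg|].
      assert (0 <= K1 * eA * (Rpower 2 (sigma - 1) * Rpower (ln 2) kappa)).
      { pose proof (Rpower_pos 2 (sigma - 1)). pose proof (Rpower_pos (ln 2) kappa).
        apply Rmult_le_pos; [apply Rmult_le_pos; lra|nra]. }
      destruct (le_lt_dec 2 N) as [HN|HN].
      - pose proof (T1 2 ltac:(lra) N). replace (fl 2) with 2%nat in H0 by (symmetry; replace 2 with (INR 2) by (simpl; lra); apply fl_INR).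
        specialize (H0 HN). fold g in H0. lra.
      - pose proof (sR_mono N 2 g Hg0 ltac:(lia)). lra. }
    destruct (growing_cv v Hgrow Hub) as [L HL]. exists L. exact HL. }
  exists SG. split.
  { intros eps Heps.
    destruct (vanish (sigma - 1) kappa (2 * (K1 * eA)) ltac:(lra) Hk ltac:(nra) eps Heps) as [N0 [HN0 HN0b]].
    exists N0. intros N HN.
    assert (Hx : 2 <= INR N) by (replace 2 with (INR 2) by (simpl; lra); apply le_INR; lia).
    rewrite (prod_eq theta N Hm).
    destruct (prod_tail_le theta N) as [Mx [HMx HMxb]].
    set (tl := sumCl (filter (fun d => negb (d <=? N)%nat) (Dl N)) (fT theta)) in *.
    assert (H1 : Cnorm tl <= K1 * eA * (Rpower (INR N) (sigma - 1) * Rpower (ln (INR N)) kappa)).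
    { eapply Rle_trans; [exact HMxb|]. eapply Rle_trans.
      - apply (sRdiff_le N Mx _ (fun d => a d * Rpower (INR d) (sigma - 1)) HMx).
        intros d Hd. rewrite (fT_norm theta sigma d) by lia. right; reflexivity.
      - pose proof (T1 (INR N) Hx Mx) as H. rewrite fl_INR in H. apply H; exact HMx. }
    pose proof (HSt (INR N) Hx) as H2. rewrite fl_INR in H2.
    replace (Csub (Cadd (sC N (fT theta)) tl) SG) with (Cadd tl (Csub (sC N (fT theta)) SG))
      by (destruct tl, (sC N (fT theta)), SG; Csplit; ring).
    eapply Rle_lt_trans; [apply Cnorm_triang|].
    specialize (HN0b (INR N) ltac:(apply le_INR; lia)). lra. }
  set (X := fun x => Rpower x (sigma + beta) * Rpower (ln x) kappa).
  assert (HQ : exists Q, forall x, 2 <= x ->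
     Cnorm (Csub (Cscal c (sC (fl x) (fun d => Cscal (Rpower (INR d) beta) (theta d)))) (Cscal c Q))
     <= Rabs c * (1 + K3) * eA * X x).
  { assert (Hnq : forall d, (1 <= d)%nat -> Cnorm (Cscal (Rpower (INR d) beta) (theta d)) = a d * Rpower (INR d) (sigma + beta)).
    { intros d Hd. rewrite Cnorm_scal, (norm_theta theta sigma d Hd). rewrite Rabs_right by (left; apply Rpower_pos).
      fold a. rewrite Rpower_plus. ring. }
    destruct (Rlt_dec (sigma + beta) 0) as [Hsb|Hsb].
    - destruct (series_conv kappa (sigma + beta) K3 eA a (fun d => Cscal (Rpower (INR d) beta) (theta d))
         Hk Hsb HK3 (Rlt_le _ _ HeA) (HT3 Hsb a eA Ha0 (Rlt_le _ _ HeA) HaB)) as [Q [_ HQt]].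
      { intros d Hd. rewrite Hnq by exact Hd. lra. }
      exists Q. intros x Hx. rewrite Cscal_sub, Cnorm_scal.
      specialize (HQt x Hx). pose proof (Rabs_pos c). unfold X.
      pose proof (Rpower_pos x (sigma + beta)). pose proof (Rpower_pos (ln x) kappa).
      assert (0 <= eA * (Rpower x (sigma + beta) * Rpower (ln x) kappa)) by (apply Rmult_le_pos; [lra|apply Rmult_le_pos; lra]).
      replace (Rabs c * (1 + K3) * eA * (Rpower x (sigma + beta) * Rpower (ln x) kappa)) with
        (Rabs c * (K3 * eA * (Rpower x (sigma + beta) * Rpower (ln x) kappa) + eA * (Rpower x (sigma + beta) * Rpower (ln x) kappa))) by ring.
      apply Rmult_le_compat_l; [lra|]. lra.
    - exists Czero. intros x Hx. rewrite Cscal_sub, Cnorm_scal.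
      replace (Csub (sC (fl x) (fun d => Cscal (Rpower (INR d) beta) (theta d))) Czero)
        with (sC (fl x) (fun d => Cscal (Rpower (INR d) beta) (theta d))) by (destruct (sC (fl x) _); Csplit; ring).
      assert (Hb : Cnorm (sC (fl x) (fun d => Cscal (Rpower (INR d) beta) (theta d))) <= Rpower x (sigma + beta) * (eA * Rpower (ln x) kappa)).
      { eapply Rle_trans; [apply Cnorm_sum|].
        eapply Rle_trans; [apply (sumRl_le _ _ (fun d => Rpower x (sigma + beta) * a d))|].
        - intros d Hd. apply in_seq in Hd. rewrite Hnq by lia. rewrite Rmult_comm.
          apply Rmult_le_compat_r; [apply Ha0|]. apply Rpower_le_base_pos; [lra|apply INR_pos1; lia|].
          pose proof (fl_spec x ltac:(lra)). assert (INR d <= INR (fl x)) by (apply le_INR; lia). lra.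
        - rewrite sumRl_scal. apply Rmult_le_compat_l; [left; apply Rpower_pos|]. apply HaB; exact Hx. }
      pose proof (Rabs_pos c). unfold X. pose proof (Rpower_pos x (sigma + beta)). pose proof (Rpower_pos (ln x) kappa).
      replace (Rabs c * (1 + K3) * eA * (Rpower x (sigma + beta) * Rpower (ln x) kappa)) with
        (Rabs c * (Rpower x (sigma + beta) * (eA * Rpower (ln x) kappa)) + Rabs c * K3 * eA * (Rpower x (sigma + beta) * Rpower (ln x) kappa)) by ring.
      assert (0 <= Rabs c * K3 * eA * (Rpower x (sigma + beta) * Rpower (ln x) kappa)).
      { apply Rmult_le_pos; [apply Rmult_le_pos; [apply Rmult_le_pos|]|]; nra. }
      assert (Rabs c * Cnorm (sC (fl x) (fun d => Cscal (Rpower (INR d) beta) (theta d))) <=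
              Rabs c * (Rpower x (sigma + beta) * (eA * Rpower (ln x) kappa))) by (apply Rmult_le_compat_l; lra).
      lra. }
  destruct HQ as [Q HQ].
  set (a2 := fun d => / dl * a d).
  assert (HaB2 : forall t, 2 <= t -> sR (fl t) a2 <= / dl * eA * Rpower (ln t) kappa).
  { intros t Ht. unfold a2, sR. rewrite sumRl_scal. rewrite Rmult_assoc. apply Rmult_le_compat_l.
    - left; apply Rinv_0_lt_compat; lra.
    - apply HaB; exact Ht. }
  assert (Ha20 : forall d, 0 <= a2 d).
  { intros d. unfold a2. apply Rmult_le_pos; [left; apply Rinv_0_lt_compat; lra|apply Ha0]. }
  assert (HB2 : 0 <= / dl * eA) by (apply Rmult_le_pos; [left; apply Rinv_0_lt_compat|]; lra).
  destruct (series_conv kappa ((sigma - 1) / 2) K2 (/ dl * eA) a2 (fun d => Cscal (ln (INR d) / INR d) (theta d))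
     Hk ltac:(lra) HK2 HB2 (HT2 a2 (/ dl * eA) Ha20 HB2 HaB2)) as [HL [HHL _]].
  { intros d Hd. pose proof (INR_pos1 d Hd) as Hdp.
    assert (Hd1 : 1 <= INR d) by (replace 1 with (INR 1) by reflexivity; apply le_INR; exact Hd).
    rewrite Cnorm_scal, (norm_theta theta sigma d Hd). fold a.
    assert (Hl0 : 0 <= ln (INR d)) by (rewrite <- ln_1; apply ln_le'; lra).
    rewrite Rabs_right by (apply Rle_ge; unfold Rdiv; apply Rmult_le_pos; [lra|left; apply Rinv_0_lt_compat; lra]).
    pose proof (ln_le_pow (INR d) dl Hd1 Hdl) as Hln.
    pose proof (Ha0 d). pose proof (Rpower_pos (INR d) sigma).
    assert (Hid : 0 < / INR d) by (apply Rinv_0_lt_compat; lra).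
    apply Rle_trans with (Rpower (INR d) dl / dl / INR d * (a d * Rpower (INR d) sigma)).
    - unfold Rdiv. apply Rmult_le_compat_r; [nra|]. apply Rmult_le_compat_r; [lra|]. exact Hln.
    - right. unfold a2.
      replace ((sigma - 1) / 2) with (dl + -1 + sigma) by (unfold dl; field).
      unfold Rdiv. rewrite (Rinv_Rpower (INR d)) by lra.
      rewrite !Rpower_plus. ring. }
  exists (Cadd (Cscal c Q) (if Req_EM_T beta (-1) then Csub Czero HL else Czero)).
  intros x Hx.
  assert (Hx0 : 0 < x) by lra.
  set (N := fl x).
  pose proof (fl_spec x ltac:(lra)) as Hfl. fold N in Hfl.
  assert (HN2 : (2 <= N)%nat) by (apply fl_le_iff; simpl; lra).
  rewrite sumC_le_eq by lra. fold N. rewrite swapC.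
  rewrite (sC_linear3 N (fun d => Rpower (INR d) beta * M beta (x / INR d)) (fun d => Rpower (INR d) beta)
     (fun d => Rpower (INR d) beta * (Sb beta (N / d) - M beta (x / INR d) - c)) c theta) by (intros; ring).
  set (P1 := sC N (fun d => Cscal (Rpower (INR d) beta * M beta (x / INR d)) (theta d))).
  set (Qn := sC N (fun d => Cscal (Rpower (INR d) beta) (theta d))).
  set (P3 := sC N (fun d => Cscal (Rpower (INR d) beta * (Sb beta (N / d) - M beta (x / INR d) - c)) (theta d))).
  set (C1 := if Req_EM_T beta (-1) then Csub Czero HL else Czero).
  replace (Csub (Cadd P1 (Cadd (Cscal c Qn) P3)) (Cadd (Cscal (M beta x) SG) (Cadd (Cscal c Q) C1)))
    with (Cadd (Csub P1 (Cadd (Cscal (M beta x) SG) C1)) (Cadd (Csub (Cscal c Qn) (Cscal c Q)) P3))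
    by (destruct P1, Qn, P3, SG, Q, C1; Csplit; ring).
  assert (HXp : 0 <= X x) by (unfold X; pose proof (Rpower_pos x (sigma + beta)); pose proof (Rpower_pos (ln x) kappa); nra).
  assert (HP3 : Cnorm P3 <= Kb * eA * X x).
  { unfold P3, sC. eapply Rle_trans; [apply Cnorm_sum|].
    eapply Rle_trans; [apply (sumRl_le _ _ (fun d => Kb * Rpower x (sigma + beta) * a d))|].
    - intros d Hd. apply in_seq in Hd. assert (Hd1 : (1 <= d)%nat) by lia.
      pose proof (INR_pos1 d Hd1) as Hdp.
      assert (HdN : INR d <= x) by (assert (INR d <= INR N) by (apply le_INR; lia); lra).
      rewrite Cnorm_scal, (norm_theta theta sigma d Hd1). fold a.
      assert (Hy : 1 <= x / INR d) by (apply (Rmult_le_reg_r (INR d)); [lra|]; field_simplify; lra).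
      pose proof (Hpow (x / INR d) Hy) as He.
      rewrite fl_div in He by (lra || lia). fold N in He.
      rewrite Rabs_mult, (Rabs_right (Rpower (INR d) beta)) by (left; apply Rpower_pos).
      rewrite Rpower_div in He by lra.
      assert (Hs : Rpower (INR d) sigma <= Rpower x sigma) by (apply Rpower_le_base_pos; lra).
      pose proof (Ha0 d). pose proof (Rpower_pos (INR d) beta). pose proof (Rpower_pos (INR d) sigma).
      pose proof (Rpower_pos x beta). pose proof (Rpower_pos (INR d) (- beta)).
      assert (Hdb : Rpower (INR d) beta * Rpower (INR d) (- beta) = 1).
      { rewrite <- Rpower_plus. replace (beta + - beta) with 0 by ring. apply Rpower_O; lra. }
      rewrite Rpower_plus.
      apply Rle_trans with (Rpower (INR d) beta * (Kb * (Rpower x beta * Rpower (INR d) (- beta))) * (a d * Rpower x sigma)).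
      + apply Rmult_le_compat; try (apply Rmult_le_pos; try apply Rabs_pos; lra).
        * apply Rmult_le_compat_l; lra.
        * apply Rmult_le_compat_l; lra.
      + right. replace (Rpower (INR d) beta * (Kb * (Rpower x beta * Rpower (INR d) (- beta))))
          with (Kb * Rpower x beta * (Rpower (INR d) beta * Rpower (INR d) (- beta))) by ring.
        rewrite Hdb. ring.
    - rewrite sumRl_scal. fold (sR N a).
      pose proof (HaB x Hx). pose proof (Rpower_pos x (sigma + beta)).
      unfold X. replace (Kb * eA * (Rpower x (sigma + beta) * Rpower (ln x) kappa))
        with (Kb * Rpower x (sigma + beta) * (eA * Rpower (ln x) kappa)) by ring.
      apply Rmult_le_compat_l; [nra|exact H]. }
  assert (HPQ : Cnorm (Csub (Cscal c Qn) (Cscal c Q)) <= Rabs c * (1 + K3) * eA * X x) by (apply HQ; exact Hx).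
  assert (HP1 : Cnorm (Csub P1 (Cadd (Cscal (M beta x) SG) C1)) <= (K1 * Rabs (/ (beta + 1)) + / dl * K2) * eA * X x).
  { unfold C1. destruct (Req_EM_T beta (-1)) as [Eb|Eb].
    - assert (Hlx : 0 < ln x) by (pose proof ln2_pos; pose proof (ln_pos_ge2 x Hx); lra).
      assert (Hpt1 : forall d, (1 <= d)%nat -> Rpower (INR d) beta * M beta (x / INR d) = (ln x - ln (INR d)) / INR d).
      { intros d Hd. assert (Hdp : 0 < INR d) by (apply INR_pos1; lia).
        rewrite M_eq by exact Eb. rewrite Eb. rewrite <- Rinv_Rpower by lra. unfold Rdiv.
        rewrite ln_mult, ln_Rinv by (try apply Rinv_0_lt_compat; lra). ring. }
      set (w := fun d => Cscal ((ln x - ln (INR d)) / INR d) (theta d)).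
      set (hT := fun d => Cscal (ln (INR d) / INR d) (theta d)).
      assert (HW : forall Mm, sC Mm w = Cadd (Cscal (ln x) (sC Mm (fT theta))) (Cscal (-1) (sC Mm hT))).
      { intros Mm. unfold w, hT, sC, fT. Csplit; rewrite <- !sumRl_scal, <- sumRl_plus; apply sumRl_ext; intros d _; simpl; unfold Rdiv; ring. }
      assert (HP1w : P1 = sC N w).
      { unfold P1, w, sC. Csplit; apply sumRl_ext; intros d Hd; apply in_seq in Hd; simpl; rewrite (Hpt1 d) by lia; ring. }
      rewrite HP1w, (M_eq beta x Eb).
      set (B0 := / dl * K2 * eA * X x).
      assert (HB0 : B0 <= (K1 * Rabs (/ (beta + 1)) + / dl * K2) * eA * X x).
      { unfold B0. pose proof (Rabs_pos (/ (beta + 1))).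
        assert (0 <= K1 * Rabs (/ (beta + 1)) * eA * X x).
        { apply Rmult_le_pos; [|exact HXp]. apply Rmult_le_pos; [apply Rmult_le_pos|]; lra. }
        nra. }
      apply Rle_trans with B0; [|exact HB0].
      assert (Hfin : forall Mm, (N <= Mm)%nat -> Cnorm (Csub (sC Mm w) (sC N w)) <= B0).
      { intros Mm HMm.
        set (g2 := fun d => a d * Rpower (INR d) ((sigma - 1) / 2)).
        eapply Rle_trans.
        - apply (sC_diff_le w (fun d => / dl * Rpower x (- dl) * g2 d) N Mm HMm).
          intros d Hd. assert (Hdp : 0 < INR d) by (apply INR_pos1; lia).
          assert (Hdx : x < INR d).
          { assert (INR (S N) <= INR d) by (apply le_INR; lia). rewrite S_INR in H. lra. }
          unfold w. rewrite Cnorm_scal, (norm_theta theta sigma d) by lia. fold a.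
          assert (Hq : ln (INR d) - ln x = ln (INR d / x)).
          { unfold Rdiv. rewrite ln_mult, ln_Rinv by (try apply Rinv_0_lt_compat; lra). ring. }
          assert (Hq1 : 1 <= INR d / x) by (apply (Rmult_le_reg_r x); [lra|]; field_simplify; lra).
          pose proof (ln_le_pow (INR d / x) dl Hq1 Hdl) as Hln.
          rewrite Rpower_div in Hln by lra.
          assert (Hneg : ln x - ln (INR d) <= 0) by (pose proof (ln_increasing x (INR d) Hx0 Hdx); lra).
          rewrite Rabs_left1 by (unfold Rdiv; assert (0 < / INR d) by (apply Rinv_0_lt_compat; lra); nra).
          pose proof (Ha0 d). pose proof (Rpower_pos (INR d) sigma).
          assert (Hid : 0 < / INR d) by (apply Rinv_0_lt_compat; lra).
          apply Rle_trans with (Rpower (INR d) dl * Rpower x (- dl) / dl / INR d * (a d * Rpower (INR d) sigma)).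
          + unfold Rdiv. apply Rmult_le_compat_r; [nra|]. rewrite Ropp_mult_distr_l.
            apply Rmult_le_compat_r; [lra|]. unfold Rdiv in Hln. lra.
          + right. unfold g2.
            replace ((sigma - 1) / 2) with (dl + -1 + sigma) by (unfold dl; field).
            unfold Rdiv. rewrite (Rinv_Rpower (INR d)) by lra.
            rewrite !Rpower_plus. ring.
        - unfold sR. rewrite !sumRl_scal. fold (sR Mm g2). fold (sR N g2).
          pose proof (T2 x Hx Mm HMm) as HT. fold N in HT. fold g2 in HT.
          assert (Hc0 : 0 <= / dl * Rpower x (- dl)) by (apply Rmult_le_pos; [left; apply Rinv_0_lt_compat; lra|left; apply Rpower_pos]).
          replace (/ dl * Rpower x (- dl) * sR Mm g2 - / dl * Rpower x (- dl) * sR N g2)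
            with (/ dl * Rpower x (- dl) * (sR Mm g2 - sR N g2)) by ring.
          eapply Rle_trans; [apply Rmult_le_compat_l; [exact Hc0|exact HT]|].
          right. unfold B0, X. rewrite Eb.
          replace (/ dl * Rpower x (- dl) * (K2 * eA * (Rpower x ((sigma - 1) / 2) * Rpower (ln x) kappa)))
            with (/ dl * K2 * eA * (Rpower x (- dl) * Rpower x ((sigma - 1) / 2)) * Rpower (ln x) kappa) by ring.
          rewrite <- Rpower_plus. replace (- dl + (sigma - 1) / 2) with (sigma + -1) by (unfold dl; field). ring. }
      apply Rle_plus_epsilon. intros eps Heps.
      destruct (HS (eps / 2 / (ln x + 1))) as [N1 HN1e].
      { apply Rdiv_lt_0_compat; lra. }
      destruct (HHL (eps / 2)) as [N2 HN2e]; [lra|].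
      set (Mm := Nat.max N (Nat.max N1 N2)).
      specialize (HN1e Mm ltac:(lia)). specialize (HN2e Mm ltac:(lia)). specialize (Hfin Mm ltac:(lia)).
      fold hT in HN2e.
      replace (Csub (sC N w) (Cadd (Cscal (ln x) SG) (Csub Czero HL)))
        with (Cadd (Csub (sC N w) (sC Mm w)) (Cadd (Cscal (ln x) (Csub (sC Mm (fT theta)) SG)) (Cscal (-1) (Csub (sC Mm hT) HL)))).
      2:{ rewrite (HW Mm). destruct (sC N w), (sC Mm (fT theta)), (sC Mm hT), SG, HL. Csplit; ring. }
      eapply Rle_trans; [apply Cnorm_triang|].
      eapply Rle_trans; [apply Rplus_le_compat_l; apply Cnorm_triang|].
      rewrite !Cnorm_scal, Cnorm_sub_sym. rewrite Rabs_right by lra.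
      replace (Rabs (-1)) with 1 by (unfold Rabs; destruct (Rcase_abs (-1)); lra).
      assert (ln x * Cnorm (Csub (sC Mm (fT theta)) SG) <= eps / 2).
      { apply Rle_trans with (ln x * (eps / 2 / (ln x + 1))); [apply Rmult_le_compat_l; lra|].
        unfold Rdiv. apply (Rmult_le_reg_r (ln x + 1)); [lra|]. field_simplify; [|lra]. nra. }
      lra.
    - assert (Hpt : forall d, (1 <= d)%nat -> Rpower (INR d) beta * M beta (x / INR d) = M beta x * / INR d).
      { intros d Hd. assert (Hdp : 0 < INR d) by (apply INR_pos1; lia).
        rewrite !M_neq by exact Eb. rewrite Rpower_div by lra.
        rewrite (Rinv_Rpower (INR d)) by lra.
        replace (Rpower (INR d) (-1)) with (Rpower (INR d) beta * Rpower (INR d) (- (beta + 1))).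
        - field. lra.
        - rewrite <- Rpower_plus. f_equal. ring. }
      assert (HP1e : P1 = Cscal (M beta x) (sC N (fT theta))).
      { unfold P1, sC. Csplit; rewrite <- sumRl_scal; apply sumRl_ext; intros d Hd; apply in_seq in Hd;
        unfold fT; simpl; rewrite (Hpt d) by lia; ring. }
      rewrite HP1e.
      replace (Csub (Cscal (M beta x) (sC N (fT theta))) (Cadd (Cscal (M beta x) SG) Czero))
        with (Cscal (M beta x) (Csub (sC N (fT theta)) SG)) by (destruct (sC N (fT theta)), SG; Csplit; ring).
      rewrite Cnorm_scal. pose proof (HSt x Hx) as H. fold N in H.
      rewrite M_neq by exact Eb. unfold Rdiv. rewrite Rabs_mult, (Rabs_right (Rpower x (beta + 1))) by (left; apply Rpower_pos).
      assert (Hxx : Rpower x (beta + 1) * Rpower x (sigma - 1) = Rpower x (sigma + beta)).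
      { rewrite <- Rpower_plus. f_equal. ring. }
      pose proof (Rabs_pos (/ (beta + 1))). pose proof (Rpower_pos x (beta + 1)).
      assert (0 <= / dl * K2 * eA * X x).
      { apply Rmult_le_pos; [|exact HXp]. apply Rmult_le_pos; [|lra]. apply Rmult_le_pos; [left; apply Rinv_0_lt_compat|]; lra. }
      apply Rle_trans with (K1 * Rabs (/ (beta + 1)) * eA * X x); [|nra].
      apply Rle_trans with (Rpower x (beta + 1) * Rabs (/ (beta + 1)) * (K1 * eA * (Rpower x (sigma - 1) * Rpower (ln x) kappa))).
      + apply Rmult_le_compat_l; [nra|exact H].
      + right. unfold X. rewrite <- Hxx. ring. }
  eapply Rle_trans; [apply Cnorm_triang|].
  eapply Rle_trans; [apply Rplus_le_compat_l; apply Cnorm_triang|].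
  assert (0 <= Kb * eA * X x) by (apply Rmult_le_pos; [nra|exact HXp]).
  change (Rpower x (sigma + beta) * Rpower (ln x) kappa) with (X x).
  replace (eA * (Kb + Rabs c + Rabs c * K3 + K1 * Rabs (/ (beta + 1)) + / dl * K2) * X x)
    with ((K1 * Rabs (/ (beta + 1)) + / dl * K2) * eA * X x + Rabs c * (1 + K3) * eA * X x + Kb * eA * X x) by ring.
  lra.
Qed.
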